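(* For complex $a,c$ with $|ac|<|q|$, \begin{align*} \sum_{n=0}^\infty \bigl(1-q^{4n+2}\bigr) \frac{\bigl(q^2/a, q^2/c; q^2\bigr)_n}{\bigl(q^2 a, q^2c; q^2\bigr)_n} (ac)^n \sum_{j=-n}^n (-1)^j q^{n^2-n-j^2} =\frac{2\bigl(q^2, ac; q^2\bigr)_\infty}{\bigl(q^2 a, q^2 c; q^2\bigr)_\infty}\sum_{n=0}^\infty \frac{\bigl(q^2/a, q^2/c; q^2\bigr)_n}{\bigl(1+q^{2n}\bigr)\bigl(-q, q^2; q^2\bigr)_n }\biggl(-\frac{ac}{q}\biggr)^n. \end{align*}
   Context: Throughout, $q$ is a complex number with $0<|q|<1$. For $x\in\mathbb{C}$, $(x;q^2)_\infty=\prod_{k=0}^\infty(1-xq^{2k})$ and, for an integer $n\ge 0$, $(x;q^2)_n=\prod_{k=0}^{n-1}(1-xq^{2k})$; also $(x_1,\dots,x_m;q^2)_n=(x_1;q^2)_n\cdots(x_m;q^2)_n$ for $n$ an integer or $\infty$. *)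

(* Defs.v *)
From Stdlib Require Import Reals ZArith ClassicalEpsilon.
From Coquelicot Require Import Coquelicot.
Open Scope C_scope.

Fixpoint qpoch (x p : C) (n : nat) : C :=
  match n with
  | O => 1
  | S m => qpoch x p m * (1 - x * pow_n p m)
  end.

(* infinite q-Pochhammer symbol (x; p)_oo : the limit of the partial products
   (chosen by Hilbert's epsilon; it is the genuine limit whenever it exists,
   which is the case for |p| < 1) *)
Definition qpinf (x p : C) : C :=
  epsilon (inhabits (0 : C))
    (fun l => filterlim (fun N => qpoch x p N) eventually (locally l)).

Definition zpowC (x : C) (z : Z) : C :=
  if (0 <=? z)%Z then pow_n x (Z.to_nat z) else / pow_n x (Z.to_nat (- z)).

(* sum_{j=-n}^{n} (-1)^j q^(n^2 - n - j^2), reindexed by j = k - n, k = 0..2n *)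
Definition inner_sum (q : C) (n : nat) : C :=
  sum_n (fun k : nat =>
           let j := (Z.of_nat k - Z.of_nat n)%Z in
           zpowC (-1) j * zpowC q (Z.of_nat n * Z.of_nat n - Z.of_nat n - j * j)%Z)
        (2 * n).

(* Main.v *)
Require Import Defs.
From Stdlib Require Import Reals ZArith Lra Lia Psatz ClassicalEpsilon.
From Coquelicot Require Import Coquelicot.
Open Scope C_scope.

Lemma pow_n_Cpow (x : C) n : pow_n x n = x ^ n.
Proof. induction n; simpl; try rewrite IHn; reflexivity. Qed.

Lemma C1_neq_0 : (1:C) <> 0.
Proof. intro H. apply (f_equal fst) in H. simpl in H. lra. Qed.

Lemma Cmod_sub_le (x y : C) : (Cmod (x - y) <= Cmod x + Cmod y)%R.
Proof. unfold Cminus. eapply Rle_trans. apply Cmod_triangle. rewrite Cmod_opp. lra. Qed.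

Lemma Cmod_1_sub_ge (x : C) : (1 - Cmod x <= Cmod (1 - x))%R.
Proof.
  assert (H := Cmod_triangle (1 - x) x).
  replace (1 - x + x) with (1:C) in H by ring. rewrite Cmod_1 in H. lra.
Qed.

Lemma Cmod_pos_nz (x : C) : x <> 0 -> (0 < Cmod x)%R.
Proof. intro. apply Cmod_gt_0. auto. Qed.

Lemma Cminus_0_r (x : C) : x - 0 = x.
Proof. ring. Qed.

Lemma Cminus_eq_0 (x y : C) : x - y = 0 -> x = y.
Proof. intros H. replace x with (x - y + y) by ring. rewrite H. ring. Qed.

Fixpoint fs (f : nat -> C) (n : nat) : C :=
  match n with O => 0 | S m => fs f m + f m end.

Lemma fs_ext (f g : nat -> C) n : (forall k, (k < n)%nat -> f k = g k) -> fs f n = fs g n.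
Proof.
  induction n; simpl; intros; auto. rewrite IHn by (intros; apply H; lia).
  rewrite H by lia. auto.
Qed.

Lemma fs_add (f g : nat -> C) n : fs (fun k => f k + g k) n = fs f n + fs g n.
Proof. induction n; simpl. ring. rewrite IHn. ring. Qed.

Lemma fs_sub (f g : nat -> C) n : fs (fun k => f k - g k) n = fs f n - fs g n.
Proof. induction n; simpl. ring. rewrite IHn. ring. Qed.

Lemma fs_scal (c : C) (f : nat -> C) n : fs (fun k => c * f k) n = c * fs f n.
Proof. induction n; simpl. ring. rewrite IHn. ring. Qed.

Lemma fs_zero n : fs (fun _ => 0) n = 0.
Proof. induction n; simpl; auto. rewrite IHn. ring. Qed.

Lemma fs_shift (f : nat -> C) n : fs f (S n) = f O + fs (fun k => f (S k)) n.
Proof. induction n; simpl. ring. simpl in IHn. rewrite IHn. ring. Qed.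

Lemma fs_split (f : nat -> C) m n : fs f (m + n) = fs f m + fs (fun k => f (m + k)%nat) n.
Proof. induction n; simpl. rewrite Nat.add_0_r. ring. rewrite Nat.add_succ_r. simpl. rewrite IHn. ring. Qed.

Lemma sum_n_fs (f : nat -> C) n : sum_n f n = fs f (S n).
Proof.
  induction n. rewrite sum_O. simpl. ring.
  rewrite sum_Sn, IHn. simpl. reflexivity.
Qed.

Lemma fs_S (f : nat -> C) n : fs f (S n) = fs f n + f n.
Proof. reflexivity. Qed.

Lemma fs_swap (h : nat -> nat -> C) N :
  fs (fun n => fs (fun r => h n r) (S n)) N = fs (fun r => fs (fun m => h (m + r)%nat r) (N - r)) N.
Proof.
  induction N. reflexivity.
  rewrite (fs_S (fun n => fs (fun r => h n r) (S n)) N), IHN.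
  rewrite (fs_S (fun r => fs (fun m => h (m + r)%nat r) (S N - r)) N).
  replace (S N - N)%nat with 1%nat by lia. simpl (fs _ 1).
  rewrite (fs_ext (fun r => fs (fun m => h (m + r)%nat r) (S N - r))
                  (fun r => fs (fun m => h (m + r)%nat r) (N - r) + h N r)).
  2:{ intros k Hk. replace (S N - k)%nat with (S (N - k)) by lia. rewrite fs_S. f_equal. f_equal. lia. }
  rewrite (fs_add (fun r => fs (fun m => h (m + r)%nat r) (N - r)) (fun r => h N r)). rewrite (fs_S (fun r => h N r) N). ring.
Qed.

Lemma fs_fold (F : nat -> C) n :
  fs F (S (2 * n)) = F n + fs (fun d => F (S n + d)%nat + F (n - S d)%nat) n.
Proof.
  revert F. induction n; intros F. simpl. ring.
  replace (S (2 * S n)) with (S (S (S (2 * n)))) by lia.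
  rewrite fs_shift. rewrite (fs_S (fun k => F (S k)) (S (2 * n))).
  rewrite (IHn (fun k => F (S k))).
  rewrite (fs_S _ n).
  rewrite (fs_ext (fun d => F (S (S n + d)) + F (S (n - S d))) (fun d => F (S (S n) + d)%nat + F (S n - S d)%nat)).
  2:{ intros k Hk. f_equal; f_equal; lia. }
  replace (S n - S n)%nat with O by lia.
  replace (S (S n) + n)%nat with (S (S (2 * n))) by lia.
  ring.
Qed.

Definition cv (u : nat -> C) (L : C) : Prop :=
  forall eps : R, (0 < eps)%R -> exists N, forall n, (N <= n)%nat -> (Cmod (u n - L) < eps)%R.

Lemma cv_filterlim u L : cv u L -> filterlim u eventually (locally L).
Proof.
  intros H. apply filterlim_locally. intros eps.
  destruct (H eps (cond_pos eps)) as [N HN]. exists N. intros n Hn.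
  apply C_NormedModule_mixin_compat1. apply HN. lia.
Qed.

Lemma filterlim_cv u L : filterlim u eventually (locally L) -> cv u L.
Proof.
  intros H eps Heps.
  assert (Hs : (0 < eps / sqrt 2)%R).
  { apply Rdiv_lt_0_compat; auto. apply sqrt_lt_R0. lra. }
  destruct (proj1 (filterlim_locally u L) H (mkposreal _ Hs)) as [N HN].
  exists N. intros n Hn. specialize (HN n Hn).
  apply C_NormedModule_mixin_compat2 in HN. simpl in HN.
  replace eps with (sqrt 2 * (eps / sqrt 2))%R. exact HN.
  field. apply Rgt_not_eq, sqrt_lt_R0. lra.
Qed.

Lemma cv_unique u L1 L2 : cv u L1 -> cv u L2 -> L1 = L2.
Proof.
  intros H1 H2. destruct (Ceq_dec (L1 - L2) 0) as [E|E].
  - replace L1 with (L1 - L2 + L2) by ring. rewrite E. ring.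
  - exfalso. assert (Hp := Cmod_pos_nz _ E).
    destruct (H1 (Cmod (L1 - L2) / 2)%R) as [N1 HN1]. lra.
    destruct (H2 (Cmod (L1 - L2) / 2)%R) as [N2 HN2]. lra.
    specialize (HN1 (N1 + N2)%nat ltac:(lia)). specialize (HN2 (N1 + N2)%nat ltac:(lia)).
    assert (Ht := Cmod_triangle (L1 - u (N1 + N2)%nat) (u (N1 + N2)%nat - L2)).
    replace (L1 - u (N1 + N2)%nat + (u (N1 + N2)%nat - L2)) with (L1 - L2) in Ht by ring.
    replace (L1 - u (N1 + N2)%nat) with (- (u (N1 + N2)%nat - L1)) in Ht by ring.
    rewrite Cmod_opp in Ht. lra.
Qed.

Lemma cv_ext u v L : (forall n, u n = v n) -> cv u L -> cv v L.
Proof. intros E H eps Heps. destruct (H eps Heps) as [N HN]. exists N. intros. rewrite <- E. auto. Qed.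

Lemma cv_ext_ev u v L N0 : (forall n, (N0 <= n)%nat -> u n = v n) -> cv u L -> cv v L.
Proof. intros E H eps Heps. destruct (H eps Heps) as [N HN]. exists (N + N0)%nat. intros.
  rewrite <- E by lia. apply HN. lia. Qed.

Lemma cv_const c : cv (fun _ => c) c.
Proof. intros eps Heps. exists O. intros. replace (c - c) with (0:C) by ring. rewrite Cmod_0. auto. Qed.

Lemma cv_plus u v L M : cv u L -> cv v M -> cv (fun n => u n + v n) (L + M).
Proof.
  intros H1 H2 eps Heps.
  destruct (H1 (eps/2)%R) as [N1 HN1]. lra. destruct (H2 (eps/2)%R) as [N2 HN2]. lra.
  exists (N1 + N2)%nat. intros n Hn.
  replace (u n + v n - (L + M)) with ((u n - L) + (v n - M)) by ring.
  eapply Rle_lt_trans. apply Cmod_triangle.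
  specialize (HN1 n ltac:(lia)). specialize (HN2 n ltac:(lia)). lra.
Qed.

Lemma cv_0_le u (b : nat -> R) : (forall n, (Cmod (u n) <= b n)%R) -> cv (fun n => RtoC (b n)) 0 -> cv u 0.
Proof.
  intros Hb H eps Heps. destruct (H eps Heps) as [N HN]. exists N. intros n Hn.
  specialize (HN n Hn). rewrite Cminus_0_r in *. rewrite Cmod_R in HN.
  eapply Rle_lt_trans. apply Hb. eapply Rle_lt_trans. apply Rle_abs. auto.
Qed.

Lemma cv_sub_0 u L : cv u L <-> cv (fun n => u n - L) 0.
Proof.
  split; intros H eps Heps; destruct (H eps Heps) as [N HN]; exists N; intros n Hn;
  specialize (HN n Hn). rewrite Cminus_0_r. auto. rewrite Cminus_0_r in HN. auto.
Qed.

Lemma cv_mult_bd u v L M : cv u L -> cv v M -> cv (fun n => u n * v n) (L * M).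
Proof.
  intros H1 H2.
  (* u bounded *)
  destruct (H1 1%R) as [N0 HN0]. lra.
  apply cv_sub_0.
  set (B := (Cmod L + 1)%R).
  intros eps Heps.
  assert (HB : (0 < B)%R) by (unfold B; generalize (Cmod_ge_0 L); lra).
  assert (HM : (0 <= Cmod M)%R) by apply Cmod_ge_0.
  destruct (H1 (eps / (2 * (Cmod M + 1)))%R) as [N1 HN1].
  { apply Rdiv_lt_0_compat; lra. }
  destruct (H2 (eps / (2 * B))%R) as [N2 HN2].
  { apply Rdiv_lt_0_compat; lra. }
  exists (N0 + N1 + N2)%nat. intros n Hn.
  rewrite Cminus_0_r. replace (u n * v n - L * M) with (u n * (v n - M) + (u n - L) * M) by ring.
  eapply Rle_lt_trans. apply Cmod_triangle. rewrite !Cmod_mult.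
  specialize (HN0 n ltac:(lia)). specialize (HN1 n ltac:(lia)). specialize (HN2 n ltac:(lia)).
  assert (Hu : (Cmod (u n) <= B)%R).
  { assert (Ht := Cmod_triangle (u n - L) L). replace (u n - L + L) with (u n) in Ht by ring. unfold B. lra. }
  assert (A1 : (Cmod (u n) * Cmod (v n - M) <= B * (eps / (2 * B)))%R).
  { apply Rmult_le_compat; try apply Cmod_ge_0; lra. }
  assert (A2 : (Cmod (u n - L) * Cmod M <= (eps / (2 * (Cmod M + 1))) * (Cmod M + 1))%R).
  { apply Rmult_le_compat; try apply Cmod_ge_0; lra. }
  replace (B * (eps / (2 * B)))%R with (eps/2)%R in A1 by (field; lra).
  replace (eps / (2 * (Cmod M + 1)) * (Cmod M + 1))%R with (eps/2)%R in A2 by (field; lra).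
  assert (Cmod (u n) * Cmod (v n - M) < eps/2 \/ Cmod (u n - L) * Cmod M < eps/2)%R.
  { destruct (Rle_lt_or_eq_dec _ _ (Cmod_ge_0 (u n - L))) as [P|P].
    - right. eapply Rle_lt_trans with ((eps / (2 * (Cmod M + 1))) * Cmod M)%R.
      apply Rmult_le_compat_r; lra.
      replace (eps/2)%R with ((eps / (2 * (Cmod M + 1))) * (Cmod M + 1))%R by (field; lra).
      apply Rmult_lt_compat_l. apply Rdiv_lt_0_compat; lra. lra.
    - right. rewrite <- P. lra. }
  lra.
Qed.

Lemma cv_scal c u L : cv u L -> cv (fun n => c * u n) (c * L).
Proof. intros. apply cv_mult_bd; auto. apply cv_const. Qed.

Lemma cv_shift u L k : cv u L -> cv (fun n => u (n + k)%nat) L.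
Proof. intros H eps Heps. destruct (H eps Heps) as [N HN]. exists N. intros. apply HN. lia. Qed.

Lemma cv_unshift u L : cv (fun n => u (S n)) L -> cv u L.
Proof. intros H eps Heps. destruct (H eps Heps) as [N HN]. exists (S N). intros n Hn.
  replace n with (S (n - 1)) by lia. apply HN. lia. Qed.

Lemma is_series_cv a L : is_series a L <-> cv (fs a) L.
Proof.
  split; intros H.
  - apply cv_unshift. apply cv_ext with (sum_n a). intros; apply sum_n_fs. apply filterlim_cv. exact H.
  - apply cv_filterlim. apply cv_ext with (fun n => fs a (S n)). intros; symmetry; apply sum_n_fs.
    apply (cv_shift _ _ 1) in H. eapply cv_ext; [|exact H]. intros n; simpl; rewrite Nat.add_1_r; reflexivity.
Qed.

Lemma cv_le u L x (B : R) N : cv u L -> (forall n, (N <= n)%nat -> (Cmod (u n - x) <= B)%R) -> (Cmod (L - x) <= B)%R.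
Proof.
  intros H Hb. destruct (Rle_or_lt (Cmod (L - x)) B) as [P|P]; auto. exfalso.
  destruct (H (Cmod (L - x) - B)%R) as [N1 HN1]. lra.
  specialize (HN1 (N + N1)%nat ltac:(lia)). specialize (Hb (N + N1)%nat ltac:(lia)).
  assert (Ht := Cmod_triangle (L - u (N + N1)%nat) (u (N + N1)%nat - x)).
  replace (L - u (N + N1)%nat + (u (N + N1)%nat - x)) with (L - x) in Ht by ring.
  replace (L - u (N + N1)%nat) with (- (u (N + N1)%nat - L)) in Ht by ring.
  rewrite Cmod_opp in Ht. lra.
Qed.

Lemma cv_fs (g : nat -> nat -> C) G R : (forall r, cv (fun N => g N r) (G r)) -> cv (fun N => fs (g N) R) (fs G R).
Proof.
  intros H. induction R. simpl. apply cv_const.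
  simpl. apply cv_plus; auto.
Qed.

Lemma dom_D_nonneg (b : nat -> C) (D rho : R) : (forall k, (Cmod (b k) <= D * rho ^ k)%R) -> (0 <= D)%R.
Proof. intros H. specialize (H O). simpl in H. generalize (Cmod_ge_0 (b O)). lra. Qed.

Lemma fs_bound (b : nat -> C) (D rho : R) m :
  (0 <= rho < 1)%R -> (forall k, (Cmod (b k) <= D * rho ^ k)%R) ->
  (Cmod (fs b m) <= D * (1 - rho ^ m) / (1 - rho))%R.
Proof.
  intros Hr Hb. induction m. simpl. rewrite Cmod_0. right. field. lra.
  simpl fs. eapply Rle_trans. apply Cmod_triangle.
  specialize (Hb m). 
  replace (D * (1 - rho ^ S m) / (1 - rho))%R with (D * (1 - rho ^ m) / (1 - rho) + D * rho ^ m)%R.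
  lra. simpl. field. lra.
Qed.

Lemma fs_bound' (b : nat -> C) (D rho : R) m :
  (0 <= rho < 1)%R -> (forall k, (Cmod (b k) <= D * rho ^ k)%R) ->
  (Cmod (fs b m) <= D / (1 - rho))%R.
Proof.
  intros Hr Hb. eapply Rle_trans. apply fs_bound; eauto.
  assert (HD := dom_D_nonneg _ _ _ Hb).
  assert (0 <= rho ^ m)%R by (apply pow_le; lra).
  unfold Rdiv. apply Rmult_le_compat_r. left; apply Rinv_0_lt_compat; lra.
  nra.
Qed.

Lemma geo_cv (a : nat -> C) (D rho : R) :
  (0 <= rho < 1)%R -> (forall k, (Cmod (a k) <= D * rho ^ k)%R) -> exists L, cv (fs a) L.
Proof.
  intros Hr Hb.
  assert (Hex : ex_series a).
  { apply (ex_series_le (K := C_AbsRing) (V := C_CompleteNormedModule) a (fun n => D * rho ^ n)%R).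
    intros n. apply Hb.
    exists (D * / (1 - rho))%R. apply (is_series_scal_l (K := R_AbsRing) (V := R_NormedModule)).
    apply is_series_geom. rewrite Rabs_pos_eq; lra. }
  destruct Hex as [L HL]. exists L. apply is_series_cv. exact HL.
Qed.

Lemma geo_tail (a : nat -> C) (D rho : R) L R :
  (0 <= rho < 1)%R -> (forall k, (Cmod (a k) <= D * rho ^ k)%R) -> cv (fs a) L ->
  (Cmod (L - fs a R) <= D * rho ^ R / (1 - rho))%R.
Proof.
  intros Hr Hb HL. apply (cv_le _ _ _ _ R HL).
  intros n Hn. replace n with (R + (n - R))%nat by lia. rewrite fs_split.
  replace (fs a R + fs (fun k => a (R + k)%nat) (n - R) - fs a R) with (fs (fun k => a (R + k)%nat) (n - R)) by ring.
  apply fs_bound'. auto. intros k. rewrite Rmult_assoc, <- pow_add. apply Hb.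
Qed.

Lemma geo_abs (a : nat -> C) (D rho : R) L :
  (0 <= rho < 1)%R -> (forall k, (Cmod (a k) <= D * rho ^ k)%R) -> cv (fs a) L ->
  (Cmod L <= D / (1 - rho))%R.
Proof.
  intros Hr Hb HL. replace L with (L - fs a O) by (simpl; ring).
  eapply Rle_trans. apply geo_tail; eauto. simpl. right; field; lra.
Qed.

Lemma pow_small (rho eps : R) : (0 <= rho < 1)%R -> (0 < eps)%R -> exists R0, (rho ^ R0 < eps)%R.
Proof.
  intros Hr He. destruct (pow_lt_1_zero rho ltac:(rewrite Rabs_pos_eq; lra) eps He) as [N HN].
  exists N. specialize (HN N (le_n _)). eapply Rle_lt_trans. apply Rle_abs. auto.
Qed.

Lemma fs_finite_cv (f : nat -> C) N : (forall r, (N <= r)%nat -> f r = 0) -> cv (fs f) (fs f N).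
Proof.
  intros H eps Heps. exists N. intros n Hn. replace n with (N + (n - N))%nat by lia.
  rewrite fs_split. rewrite (fs_ext (fun k => f (N + k)%nat) (fun _ => 0)). rewrite fs_zero.
  replace (fs f N + 0 - fs f N) with (0:C) by ring. rewrite Cmod_0. auto.
  intros. apply H. lia.
Qed.

Lemma tannery (g : nat -> nat -> C) (S G : nat -> C) (D rho : R) :
  (0 <= rho < 1)%R ->
  (forall N r, (Cmod (g N r) <= D * rho ^ r)%R) ->
  (forall N, cv (fs (g N)) (S N)) ->
  (forall r, cv (fun N => g N r) (G r)) ->
  exists L, cv (fs G) L /\ cv S L.
Proof.
  intros Hr Hb HS HG.
  assert (HbG : forall r, (Cmod (G r) <= D * rho ^ r)%R).
  { intros r. replace (G r) with (G r - 0) by ring. apply (cv_le _ _ _ _ O (HG r)).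
    intros. rewrite Cminus_0_r. apply Hb. }
  destruct (geo_cv G D rho Hr HbG) as [L HL]. exists L. split; auto.
  intros eps Heps.
  assert (HD : (0 <= D)%R) by (apply (dom_D_nonneg (g O) D rho); auto).
  destruct (pow_small rho (eps * (1 - rho) / (4 * (D + 1)))%R Hr) as [R0 HR0].
  { apply Rdiv_lt_0_compat. nra. lra. }
  assert (Htail : (D * rho ^ R0 / (1 - rho) < eps / 4)%R).
  { apply Rmult_lt_reg_r with ((1 - rho) / (D + 1))%R. apply Rdiv_lt_0_compat; lra.
    assert (0 <= rho ^ R0)%R by (apply pow_le; lra).
    replace (D * rho ^ R0 / (1 - rho) * ((1 - rho) / (D + 1)))%R with (rho ^ R0 * (D / (D + 1)))%R by (field; lra).
    replace (eps / 4 * ((1 - rho) / (D + 1)))%R with (eps * (1 - rho) / (4 * (D + 1)))%R by (field; lra).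
    eapply Rle_lt_trans; [|exact HR0].
    rewrite <- (Rmult_1_r (rho ^ R0)) at 2. apply Rmult_le_compat_l; auto.
    apply Rmult_le_reg_r with (D + 1)%R. lra. unfold Rdiv. rewrite Rmult_assoc, Rinv_l by lra. lra. }
  destruct (cv_fs g G R0 HG (eps / 4)%R) as [N1 HN1]. lra.
  exists N1. intros N HN.
  specialize (HN1 N HN).
  assert (T1 := geo_tail (g N) D rho (S N) R0 Hr (Hb N) (HS N)).
  assert (T2 := geo_tail G D rho L R0 Hr HbG HL).
  replace (S N - L) with ((S N - fs (g N) R0) + (fs (g N) R0 - fs G R0) - (L - fs G R0)) by ring.
  eapply Rle_lt_trans. apply Cmod_sub_le.
  eapply Rle_lt_trans. apply Rplus_le_compat_r. apply Cmod_triangle.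
  lra.
Qed.

Lemma qpoch_S x p n : qpoch x p (S n) = qpoch x p n * (1 - x * p ^ n).
Proof. simpl. rewrite pow_n_Cpow. reflexivity. Qed.

Lemma qpoch_0 x p : qpoch x p 0 = 1.
Proof. reflexivity. Qed.

Lemma qpoch_add x p m n : qpoch x p (m + n) = qpoch x p m * qpoch (x * p ^ m) p n.
Proof.
  induction n. rewrite Nat.add_0_r. simpl. ring.
  rewrite Nat.add_succ_r, !qpoch_S, IHn, Cpow_add_r. ring.
Qed.

Lemma qpoch_nz x p n : (forall k, x * p ^ k <> 1) -> qpoch x p n <> 0.
Proof.
  intros H. induction n. simpl. apply C1_neq_0.
  rewrite qpoch_S. apply Cmult_neq_0; auto. intro E. apply (H n).
  replace (x * p ^ n) with (1 - (1 - x * p ^ n)) by ring. rewrite E. ring.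
Qed.

Lemma pow_le1 (r : R) n : (0 <= r <= 1)%R -> (r ^ n <= 1)%R.
Proof. intros H. induction n; simpl. lra. assert (0 <= r ^ n)%R by (apply pow_le; lra). nra. Qed.

Definition sK (x p : C) n : R := (Cmod x * (1 - Cmod p ^ n) / (1 - Cmod p))%R.

Lemma sK_S x p n : (Cmod p < 1)%R -> sK x p (S n) = (sK x p n + Cmod x * Cmod p ^ n)%R.
Proof. intros. unfold sK. simpl. field. lra. Qed.

Lemma sK_le x p n : (Cmod p < 1)%R -> (0 <= sK x p n <= Cmod x / (1 - Cmod p))%R.
Proof.
  intros Hp. unfold sK. assert (0 <= Cmod p)%R by apply Cmod_ge_0.
  assert (0 <= Cmod p ^ n <= 1)%R. { split. apply pow_le; lra. apply pow_le1; lra. }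
  assert (0 <= Cmod x)%R by apply Cmod_ge_0.
  split. apply Rdiv_le_0_compat; [nra|lra].
  unfold Rdiv; apply Rmult_le_compat_r; [left; apply Rinv_0_lt_compat; lra| nra].
Qed.

Lemma qpoch_near1_gen x p n : (Cmod p < 1)%R -> (Cmod x / (1 - Cmod p) <= 1/3)%R ->
  (Cmod (qpoch x p n - 1) <= 1 / (1 - sK x p n) - 1)%R.
Proof.
  intros Hp Hx. induction n.
  - simpl. unfold sK. simpl. replace (1 - 1) with (0:C) by ring. rewrite Cmod_0. right. field_simplify; lra.
  - rewrite qpoch_S.
    assert (Hs := sK_le x p n Hp). assert (Hs1 := sK_le x p (S n) Hp).
    rewrite sK_S in * by auto.
    set (s := sK x p n) in *. set (a := (Cmod x * Cmod p ^ n)%R) in *.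
    assert (Ha : (0 <= a)%R). { unfold a. apply Rmult_le_pos. apply Cmod_ge_0. apply pow_le, Cmod_ge_0. }
    replace (qpoch x p n * (1 - x * p ^ n) - 1) with ((qpoch x p n - 1) - qpoch x p n * (x * p ^ n)) by ring.
    eapply Rle_trans. apply Cmod_sub_le. rewrite !Cmod_mult, Cmod_pow. fold a.
    assert (HP : (Cmod (qpoch x p n) <= 1 / (1 - s))%R).
    { assert (Ht := Cmod_triangle (qpoch x p n - 1) 1). replace (qpoch x p n - 1 + 1) with (qpoch x p n) in Ht by ring.
      rewrite Cmod_1 in Ht. lra. }
    assert (Hss : (s + a <= 1/3)%R) by lra.
    assert (Cmod (qpoch x p n) * a <= 1 / (1 - s) * a)%R by (apply Rmult_le_compat_r; auto).
    assert (1 / (1 - s) - 1 + 1 / (1 - s) * a <= 1 / (1 - (s + a)) - 1)%R.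
    { apply Rplus_le_reg_r with 1%R. 
      replace (1 / (1 - s) - 1 + 1 / (1 - s) * a + 1)%R with ((1 + a) / (1 - s))%R by (field; lra).
      replace (1 / (1 - (s + a)) - 1 + 1)%R with (1 / (1 - (s + a)))%R by ring.
      apply Rmult_le_reg_r with ((1 - s) * (1 - (s + a)))%R. apply Rmult_lt_0_compat; lra.
      replace ((1 + a) / (1 - s) * ((1 - s) * (1 - (s + a))))%R with ((1 + a) * (1 - (s + a)))%R by (field; lra).
      replace (1 / (1 - (s + a)) * ((1 - s) * (1 - (s + a))))%R with (1 - s)%R by (field; lra).
      nra. }
    lra.
Qed.

Lemma qpoch_near1 x p n : (Cmod p < 1)%R -> (Cmod x / (1 - Cmod p) <= 1/3)%R ->
  (Cmod (qpoch x p n - 1) <= 1 / 2)%R.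
Proof.
  intros Hp Hx. eapply Rle_trans. apply qpoch_near1_gen; auto.
  assert (Hs := sK_le x p n Hp).
  apply Rplus_le_reg_r with 1%R.
  replace (1 / (1 - sK x p n) - 1 + 1)%R with (1 / (1 - sK x p n))%R by ring.
  apply Rmult_le_reg_r with (1 - sK x p n)%R. lra.
  replace (1 / (1 - sK x p n) * (1 - sK x p n))%R with 1%R by (field; lra). lra.
Qed.

Lemma qpoch_lower_small x p n : (Cmod p < 1)%R -> (Cmod x / (1 - Cmod p) <= 1/3)%R ->
  (1/2 <= Cmod (qpoch x p n))%R.
Proof.
  intros Hp Hx. assert (H := qpoch_near1 x p n Hp Hx).
  assert (Ht := Cmod_1_sub_ge (1 - qpoch x p n)).
  replace (1 - (1 - qpoch x p n)) with (qpoch x p n) in Ht by ring.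
  replace (1 - qpoch x p n) with (- (qpoch x p n - 1)) in Ht by ring. rewrite Cmod_opp in Ht. lra.
Qed.

Lemma qpoch_upper x p n : (Cmod p < 1)%R -> (Cmod (qpoch x p n) <= exp (Cmod x / (1 - Cmod p)))%R.
Proof.
  intros Hp. assert (forall n, Cmod (qpoch x p n) <= exp (sK x p n))%R.
  { induction n0. simpl. rewrite Cmod_1. unfold sK. simpl. replace (Cmod x * (1 - 1) / (1 - Cmod p))%R with 0%R by (field; lra).
    rewrite exp_0. lra.
    rewrite qpoch_S, Cmod_mult, sK_S, exp_plus by auto.
    apply Rmult_le_compat; try apply Cmod_ge_0; auto.
    eapply Rle_trans. apply Cmod_sub_le. rewrite Cmod_1, Cmod_mult, Cmod_pow.
    apply exp_ineq1_le. }
  eapply Rle_trans. apply H. destruct (Rle_lt_or_eq_dec _ _ (proj2 (sK_le x p n Hp))) as [E|E].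
  left. apply exp_increasing. auto. rewrite E. lra.
Qed.

Lemma finite_min (f : nat -> R) K : (forall n, (0 < f n)%R) -> exists d, (0 < d)%R /\ forall n, (n <= K)%nat -> (d <= f n)%R.
Proof.
  intros H. induction K.
  - exists (f O). split; auto. intros n Hn. replace n with O by lia. lra.
  - destruct IHK as [d [Hd Hd']]. exists (Rmin d (f (S K))). split. apply Rmin_pos; auto.
    intros n Hn. destruct (Nat.eq_dec n (S K)). subst. apply Rmin_r.
    eapply Rle_trans. apply Rmin_l. apply Hd'. lia.
Qed.

Lemma qpoch_lower x p : (Cmod p < 1)%R -> (forall k, x * p ^ k <> 1) ->
  exists d, (0 < d)%R /\ forall n, (d <= Cmod (qpoch x p n))%R.
Proof.
  intros Hp Hx.
  assert (Hp0 : (0 <= Cmod p)%R) by apply Cmod_ge_0.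
  destruct (pow_small (Cmod p) ((1 - Cmod p) / (3 * (Cmod x + 1)))%R) as [K HK]. lra.
  { apply Rdiv_lt_0_compat. lra. generalize (Cmod_ge_0 x); lra. }
  assert (HK' : (Cmod (x * p ^ K) / (1 - Cmod p) <= 1/3)%R).
  { rewrite Cmod_mult, Cmod_pow.
    assert (Hx0 := Cmod_ge_0 x). assert (Hk0 : (0 <= Cmod p ^ K)%R) by (apply pow_le; lra).
    assert (A : (Cmod p ^ K * (3 * (Cmod x + 1)) < 1 - Cmod p)%R).
    { apply Rmult_lt_compat_r with (r := (3 * (Cmod x + 1))%R) in HK. 2: lra.
      replace ((1 - Cmod p) / (3 * (Cmod x + 1)) * (3 * (Cmod x + 1)))%R with (1 - Cmod p)%R in HK by (field; lra).
      exact HK. }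
    apply Rmult_le_reg_r with (1 - Cmod p)%R. lra.
    unfold Rdiv. rewrite Rmult_assoc, Rinv_l by lra. nra. }
  destruct (finite_min (fun n => Cmod (qpoch x p n)) K) as [d [Hd Hd']].
  { intros n. apply Cmod_pos_nz, qpoch_nz; auto. }
  exists (Rmin d (Cmod (qpoch x p K) / 2)). split.
  { apply Rmin_pos; auto. apply Rdiv_lt_0_compat; try lra. apply Cmod_pos_nz, qpoch_nz; auto. }
  intros n. destruct (le_lt_dec n K).
  - eapply Rle_trans. apply Rmin_l. auto.
  - eapply Rle_trans. apply Rmin_r. replace n with (K + (n - K))%nat by lia.
    rewrite qpoch_add, Cmod_mult.
    assert (Hl := qpoch_lower_small (x * p ^ K) p (n - K) Hp HK').
    generalize (Cmod_ge_0 (qpoch x p K)). nra.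
Qed.

Lemma qpoch_cv_ex x p : (Cmod p < 1)%R -> exists l, cv (qpoch x p) l.
Proof.
  intros Hp.
  set (d := fun k => qpoch x p (S k) - qpoch x p k).
  assert (Hd : forall k, (Cmod (d k) <= (exp (Cmod x / (1 - Cmod p)) * Cmod x) * Cmod p ^ k)%R).
  { intros k. unfold d. rewrite qpoch_S.
    replace (qpoch x p k * (1 - x * p ^ k) - qpoch x p k) with (- (qpoch x p k * (x * p ^ k))) by ring.
    rewrite Cmod_opp, !Cmod_mult, Cmod_pow, <- Rmult_assoc.
    apply Rmult_le_compat_r. apply pow_le, Cmod_ge_0. apply Rmult_le_compat_r. apply Cmod_ge_0.
    apply qpoch_upper; auto. }
  destruct (geo_cv d _ (Cmod p) ltac:(split; [apply Cmod_ge_0|auto]) Hd) as [L HL].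
  exists (1 + L). apply cv_ext with (fun n => 1 + fs d n).
  { intros n. induction n. simpl fs. rewrite qpoch_0. ring. rewrite fs_S. replace (d n) with (qpoch x p (S n) - qpoch x p n) by reflexivity. rewrite <- IHn. ring. }
  apply cv_plus; auto. apply cv_const.
Qed.

Lemma qpinf_cv x p : (Cmod p < 1)%R -> cv (qpoch x p) (qpinf x p).
Proof.
  intros Hp. unfold qpinf.
  assert (Hex : exists l, filterlim (fun N => qpoch x p N) eventually (locally l)).
  { destruct (qpoch_cv_ex x p Hp) as [l Hl]. exists l. apply cv_filterlim. exact Hl. }
  pose proof (epsilon_spec (inhabits (0:C)) _ Hex) as H.
  apply filterlim_cv. exact H.
Qed.

Lemma qpinf_split x p m : (Cmod p < 1)%R -> qpinf x p = qpoch x p m * qpinf (x * p ^ m) p.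
Proof.
  intros Hp. apply (cv_unique (fun n => qpoch x p (n + m)%nat)).
  apply cv_shift. apply qpinf_cv; auto.
  apply cv_ext with (fun n => qpoch x p m * qpoch (x * p ^ m) p n).
  intros n. rewrite Nat.add_comm, qpoch_add. reflexivity.
  apply cv_scal. apply qpinf_cv; auto.
Qed.

Lemma qpinf_nz x p : (Cmod p < 1)%R -> (forall k, x * p ^ k <> 1) -> qpinf x p <> 0.
Proof.
  intros Hp Hx E. destruct (qpoch_lower x p Hp Hx) as [d [Hd Hd']].
  destruct (qpinf_cv x p Hp d Hd) as [N HN]. specialize (HN N (le_n _)).
  rewrite E, Cminus_0_r in HN. specialize (Hd' N). lra.
Qed.

Lemma qpinf_S x p : (Cmod p < 1)%R -> qpinf x p = (1 - x) * qpinf (x * p) p.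
Proof.
  intros Hp. rewrite (qpinf_split x p 1) by auto. rewrite qpoch_S, qpoch_0, Cpow_1_r.
  replace (p ^ 0) with (1:C) by reflexivity. ring.
Qed.

Definition slim (u : nat -> C) : C := epsilon (inhabits (0:C)) (fun L => cv (fs u) L).

Lemma slim_cv u : (exists L, cv (fs u) L) -> cv (fs u) (slim u).
Proof. intros H. exact (epsilon_spec (inhabits (0:C)) _ H). Qed.

Lemma Cmod_lt1_neq1 (y : C) : (Cmod y < 1)%R -> y <> 1.
Proof. intros H E. rewrite E, Cmod_1 in H. lra. Qed.

Lemma Cpow_lt1 (p : C) k : (Cmod p < 1)%R -> (Cmod (p ^ S k) < 1)%R.
Proof.
  intros Hp. rewrite Cmod_pow. assert (0 <= Cmod p)%R by apply Cmod_ge_0.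
  simpl. assert (Cmod p ^ k <= 1)%R by (apply pow_le1; lra). nra.
Qed.

Lemma qpp_nz (p : C) : (Cmod p < 1)%R -> forall k, p * p ^ k <> 1.
Proof. intros Hp k. apply Cmod_lt1_neq1. rewrite <- Cpow_S. apply Cpow_lt1; auto. Qed.

Lemma geo0 (D rho : R) : (0 <= rho < 1)%R -> cv (fun n => RtoC (D * rho ^ n)) 0.
Proof.
  intros Hr eps Heps.
  destruct (pow_small rho (eps / (Rabs D + 1))%R Hr) as [N HN].
  { apply Rdiv_lt_0_compat; auto. generalize (Rabs_pos D); lra. }
  exists N. intros n Hn. rewrite Cminus_0_r, Cmod_R, Rabs_mult.
  assert (Rabs (rho ^ n) <= rho ^ N)%R.
  { rewrite Rabs_pos_eq by (apply pow_le; lra). replace n with (N + (n - N))%nat by lia.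
    rewrite pow_add. assert (0 <= rho ^ N)%R by (apply pow_le; lra).
    assert (rho ^ (n - N) <= 1)%R by (apply pow_le1; lra).
    assert (0 <= rho ^ (n - N))%R by (apply pow_le; lra). nra. }
  assert (Rabs D * rho ^ N < eps)%R.
  { apply Rle_lt_trans with ((Rabs D + 1) * rho ^ N)%R.
    assert (0 <= rho ^ N)%R by (apply pow_le; lra). nra.
    apply Rmult_lt_reg_r with (/ (Rabs D + 1))%R. apply Rinv_0_lt_compat. generalize (Rabs_pos D); lra.
    replace ((Rabs D + 1) * rho ^ N * / (Rabs D + 1))%R with (rho ^ N)%R by (field; generalize (Rabs_pos D); lra).
    exact HN. }
  generalize (Rabs_pos D). nra.
Qed.

Section QGauss.
Variables (a b p : C).
Hypotheses (Hp : (Cmod p < 1)%R) (Ha : a <> 0) (Hb : b <> 0).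

Definition tg (c : C) (n : nat) : C :=
  qpoch a p n * qpoch b p n / (qpoch p p n * qpoch c p n) * (c / (a * b)) ^ n.

Lemma tg_tele (c : C) N : (forall k, c * p ^ k <> 1) ->
  fs (fun n => (1 - c) * (1 - c / (a * b)) * tg c n - (1 - c / a) * (1 - c / b) * tg (c * p) n) N
  = - ((1 - c) * (1 - p ^ N) * tg c N).
Proof.
  intros Hc. induction N.
  - simpl. unfold tg. simpl. ring.
  - rewrite fs_S, IHN. unfold tg.
    assert (E1 : qpoch c p (S N) = (1 - c) * qpoch (c * p) p N).
    { replace (S N) with (1 + N)%nat by lia. rewrite qpoch_add, qpoch_S, qpoch_0, Cpow_1_r.
      replace (p ^ 0) with (1:C) by reflexivity. ring. }
    assert (Hcn : 1 - c * p ^ N <> 0).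
    { intro E. apply (Hc N). replace (c * p ^ N) with (1 - (1 - c * p ^ N)) by ring. rewrite E. ring. }
    assert (Hc0 : 1 - c <> 0).
    { intro E. apply (Hc O). simpl. replace (c * 1) with (1 - (1 - c)) by ring. rewrite E. ring. }
    assert (Hcp : qpoch c p N <> 0) by (apply qpoch_nz; auto).
    assert (Hpp : qpoch p p N <> 0) by (apply qpoch_nz, qpp_nz; auto).
    assert (Hp1 : 1 - p * p ^ N <> 0).
    { intro E. apply (qpp_nz p Hp N). replace (p * p ^ N) with (1 - (1 - p * p ^ N)) by ring. rewrite E. ring. }
    assert (E3 : qpoch (c * p) p N = qpoch c p N * (1 - c * p ^ N) / (1 - c)).
    { rewrite <- qpoch_S, E1. field. auto. }
    replace ((c * p / (a * b)) ^ N) with ((c / (a * b)) ^ N * p ^ N) by (rewrite <- Cpow_mult_l; f_equal; field; auto).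
    rewrite E3, !qpoch_S, !Cpow_S.
    set (w := (c / (a * b)) ^ N). set (u := p ^ N).
    field. repeat split; auto.
Qed.


Lemma tg_0 c : tg c 0 = 1.
Proof. unfold tg. simpl. field. Qed.

Lemma tg_bound (c : C) : (forall k, c * p ^ k <> 1) ->
  exists C0, forall K n, (Cmod (tg (c * p ^ K) n) <= C0 * Cmod (c / (a * b)) ^ n * Cmod p ^ (K * n))%R.
Proof.
  intros Hc.
  destruct (qpoch_lower p p Hp (qpp_nz p Hp)) as [dp [Hdp Hdp']].
  destruct (qpoch_lower c p Hp Hc) as [dc [Hdc Hdc']].
  set (Ea := exp (Cmod a / (1 - Cmod p))). set (Eb := exp (Cmod b / (1 - Cmod p))).
  set (Ec := exp (Cmod c / (1 - Cmod p))).
  assert (HEc : (0 < Ec)%R) by apply exp_pos.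
  exists (Ea * Eb * (Ec / (dp * dc)))%R. intros K n. unfold tg.
  assert (HQ : forall m, qpoch (c * p ^ K) p m <> 0).
  { intros m. apply qpoch_nz. intros k. rewrite <- Cmult_assoc, <- Cpow_add_r. apply Hc. }
  assert (HP : qpoch p p n <> 0) by (apply qpoch_nz, qpp_nz; auto).
  rewrite Cmod_mult, Cmod_div, !Cmod_mult, Cmod_pow.
  2:{ apply Cmult_neq_0; auto. }
  replace (c * p ^ K / (a * b)) with ((c / (a * b)) * p ^ K) by (field; auto).
  rewrite Cmod_mult, Rpow_mult_distr, Cmod_pow, <- pow_mult.
  assert (L1 : (Cmod (qpoch a p n) * Cmod (qpoch b p n) <= Ea * Eb)%R).
  { apply Rmult_le_compat; try apply Cmod_ge_0; apply qpoch_upper; auto. }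
  assert (L2 : (dp * (dc / Ec) <= Cmod (qpoch p p n) * Cmod (qpoch (c * p ^ K) p n))%R).
  { apply Rmult_le_compat. lra. apply Rdiv_le_0_compat; lra. auto.
    assert (E : qpoch c p (K + n) = qpoch c p K * qpoch (c * p ^ K) p n) by apply qpoch_add.
    assert (U := qpoch_upper c p K Hp). fold Ec in U.
    assert (D := Hdc' (K + n)%nat). rewrite E, Cmod_mult in D.
    apply Rmult_le_reg_r with Ec. auto. unfold Rdiv. rewrite Rmult_assoc, Rinv_l by lra. rewrite Rmult_1_r.
    assert (0 <= Cmod (qpoch (c * p ^ K) p n))%R by apply Cmod_ge_0. nra. }
  assert (Hd : (0 < dp * (dc / Ec))%R). { apply Rmult_lt_0_compat; auto. apply Rdiv_lt_0_compat; auto. }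
  assert (0 <= Cmod (c / (a * b)) ^ n * Cmod p ^ (K * n))%R.
  { apply Rmult_le_pos; apply pow_le, Cmod_ge_0. }
  replace (Ea * Eb * (Ec / (dp * dc)))%R with (Ea * Eb / (dp * (dc / Ec)))%R by (field; lra).
  set (X := (Cmod (c / (a * b)) ^ n * Cmod p ^ (K * n))%R) in *.
  replace (Ea * Eb / (dp * (dc / Ec)) * Cmod (c / (a * b)) ^ n * Cmod p ^ (K * n))%R
    with (Ea * Eb / (dp * (dc / Ec)) * X)%R by (unfold X; ring).
  replace (Cmod (qpoch a p n) * Cmod (qpoch b p n) / (Cmod (qpoch p p n) * Cmod (qpoch (c * p ^ K) p n)) *
    (Cmod (c / (a * b)) ^ n * Cmod p ^ (K * n)))%R
    with (Cmod (qpoch a p n) * Cmod (qpoch b p n) / (Cmod (qpoch p p n) * Cmod (qpoch (c * p ^ K) p n)) * X)%R by (unfold X; ring).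
  apply Rmult_le_compat_r; auto.
  unfold Rdiv. apply Rmult_le_compat; auto. apply Rmult_le_pos; apply Cmod_ge_0.
  left. apply Rinv_0_lt_compat. nra.
  apply Rinv_le_contravar; auto.
Qed.


Lemma tg_bound' (c : C) K n C0 : (forall K n, (Cmod (tg (c * p ^ K) n) <= C0 * Cmod (c / (a * b)) ^ n * Cmod p ^ (K * n))%R) ->
  (Cmod (tg (c * p ^ K) n) <= C0 * Cmod (c / (a * b)) ^ n)%R.
Proof.
  intros H. eapply Rle_trans. apply H. 
  assert (0 <= C0)%R.
  { specialize (H O O). rewrite tg_0, Cmod_1 in H. simpl in H. lra. }
  assert (Cmod p ^ (K * n) <= 1)%R by (apply pow_le1; split; [apply Cmod_ge_0|lra]).
  assert (0 <= C0 * Cmod (c / (a * b)) ^ n)%R by (apply Rmult_le_pos; auto; apply pow_le, Cmod_ge_0).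
  nra.
Qed.

Section Fix_c.
Variable c : C.
Hypotheses (Hc : forall k, c * p ^ k <> 1) (Hcab : (Cmod (c / (a * b)) < 1)%R).

Definition Fc (K : nat) : C := slim (tg (c * p ^ K)).

Lemma Fc_cv K : cv (fs (tg (c * p ^ K))) (Fc K).
Proof.
  apply slim_cv. destruct (tg_bound c Hc) as [C0 HC0].
  apply (geo_cv _ C0 (Cmod (c / (a * b)))). split; auto. apply Cmod_ge_0.
  intros n. apply tg_bound'; auto.
Qed.

Lemma Fc_FE K : (1 - c * p ^ K) * (1 - c * p ^ K / (a * b)) * Fc K = (1 - c * p ^ K / a) * (1 - c * p ^ K / b) * Fc (S K).
Proof.
  destruct (tg_bound c Hc) as [C0 HC0].
  set (c' := c * p ^ K).
  assert (Hc' : forall k, c' * p ^ k <> 1). { intros k. unfold c'. rewrite <- Cmult_assoc, <- Cpow_add_r. apply Hc. }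
  assert (E : c * p ^ S K = c' * p) by (unfold c'; rewrite Cpow_S; ring).
  unfold Fc at 2. rewrite E.
  apply Cminus_eq_0.
  apply (cv_unique (fun N => - ((1 - c') * (1 - p ^ N) * tg c' N))).
  - apply cv_ext with (fun N => fs (fun n => (1 - c') * (1 - c' / (a * b)) * tg c' n - (1 - c' / a) * (1 - c' / b) * tg (c' * p) n) N).
    intros N. apply tg_tele; auto.
    apply cv_ext with (fun N => (1 - c') * (1 - c' / (a * b)) * fs (tg c') N - (1 - c' / a) * (1 - c' / b) * fs (tg (c' * p)) N).
    { intros N. rewrite fs_sub, !fs_scal. reflexivity. }
    unfold Cminus at 3. apply cv_plus. apply cv_scal. apply Fc_cv.
    apply cv_ext with (fun N => (- ((1 - c' / a) * (1 - c' / b))) * fs (tg (c' * p)) N).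
    intros; ring. 
    replace (- ((1 - c' / a) * (1 - c' / b) * slim (tg (c' * p)))) with ((- ((1 - c' / a) * (1 - c' / b))) * slim (tg (c' * p))) by ring.
    apply cv_scal. rewrite <- E. apply Fc_cv.
  - apply (cv_0_le _ (fun N => (Cmod (1 - c') * 2 * C0) * Cmod (c / (a * b)) ^ N)%R).
    + intros N. rewrite Cmod_opp, !Cmod_mult.
      assert (B1 : (Cmod (1 - p ^ N) <= 2)%R).
      { eapply Rle_trans. apply Cmod_sub_le. rewrite Cmod_1, Cmod_pow.
        assert (Cmod p ^ N <= 1)%R by (apply pow_le1; split; [apply Cmod_ge_0|lra]). lra. }
      assert (B2 := tg_bound' c K N C0 HC0). fold c' in B2.
      assert (0 <= Cmod (1 - c'))%R by apply Cmod_ge_0.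
      replace (Cmod (1 - c') * 2 * C0 * Cmod (c / (a * b)) ^ N)%R with (Cmod (1 - c') * 2 * (C0 * Cmod (c / (a * b)) ^ N))%R by ring.
      apply Rmult_le_compat; auto. apply Rmult_le_pos; auto; apply Cmod_ge_0. apply Cmod_ge_0.
      apply Rmult_le_compat_l; auto.
    + apply geo0. split; auto. apply Cmod_ge_0.
Qed.

Lemma Fc_iter K : qpoch c p K * qpoch (c / (a * b)) p K * Fc 0 = qpoch (c / a) p K * qpoch (c / b) p K * Fc K.
Proof.
  induction K. simpl. ring.
  rewrite !qpoch_S.
  transitivity (qpoch (c / a) p K * qpoch (c / b) p K * ((1 - c * p ^ K) * (1 - c * p ^ K / (a * b)) * Fc K)).
  - replace (qpoch (c / a) p K * qpoch (c / b) p K * ((1 - c * p ^ K) * (1 - c * p ^ K / (a * b)) * Fc K))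
      with ((1 - c * p ^ K) * (1 - c * p ^ K / (a * b)) * (qpoch (c / a) p K * qpoch (c / b) p K * Fc K)) by ring.
    rewrite <- IHK. field. auto.
  - rewrite Fc_FE. field. auto.
Qed.

Lemma Fc_lim : cv Fc 1.
Proof.
  destruct (tg_bound c Hc) as [C0 HC0].
  destruct (tannery (fun K n => tg (c * p ^ K) n) Fc (fun n => if Nat.eqb n 0 then 1 else 0) C0 (Cmod (c / (a * b))))
    as [L [HL1 HL2]].
  - split; auto. apply Cmod_ge_0.
  - intros. apply tg_bound'; auto.
  - apply Fc_cv.
  - intros n. destruct n.
    + simpl. apply cv_ext with (fun _ => 1). intros; rewrite tg_0; auto. apply cv_const.
    + simpl. apply (cv_0_le _ (fun K => C0 * Cmod p ^ K)%R).
      * intros K. eapply Rle_trans. apply HC0.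
        assert (0 <= C0)%R. { specialize (HC0 O O). rewrite tg_0, Cmod_1 in HC0. simpl in HC0. lra. }
        assert (Cmod (c / (a * b)) ^ S n <= 1)%R by (apply pow_le1; split; [apply Cmod_ge_0|lra]).
        assert (Cmod p ^ (K * S n) <= Cmod p ^ K)%R.
        { replace (K * S n)%nat with (K + K * n)%nat by lia. rewrite pow_add.
          assert (0 <= Cmod p ^ K)%R by (apply pow_le, Cmod_ge_0).
          assert (Cmod p ^ (K * n) <= 1)%R by (apply pow_le1; split; [apply Cmod_ge_0|lra]).
          assert (0 <= Cmod p ^ (K * n))%R by (apply pow_le, Cmod_ge_0). nra. }
        assert (0 <= Cmod (c / (a * b)) ^ S n)%R by (apply pow_le, Cmod_ge_0).
        assert (0 <= Cmod p ^ (K * S n))%R by (apply pow_le, Cmod_ge_0).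
        assert (C0 * Cmod (c / (a * b)) ^ S n <= C0)%R by nra.
        nra.
      * apply geo0. split; [apply Cmod_ge_0|auto].
  - enough (E : L = 1) by (rewrite <- E; auto).
    symmetry. apply (cv_unique (fs (fun n => if Nat.eqb n 0 then 1 else 0))); auto.
    apply cv_ext_ev with (fun _ => 1) 1%nat. 
    intros n Hn. destruct n. lia. rewrite fs_shift. simpl. rewrite fs_zero. ring.
    apply cv_const.
Qed.

Lemma qgauss_main : exists L, cv (fs (tg c)) L /\ qpinf c p * qpinf (c / (a * b)) p * L = qpinf (c / a) p * qpinf (c / b) p.
Proof.
  exists (Fc 0). split.
  - assert (H := Fc_cv 0). replace (c * p ^ 0) with c in H by (simpl; ring). exact H.
  - apply (cv_unique (fun K => qpoch c p K * qpoch (c / (a * b)) p K * Fc 0)).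
    + apply cv_mult_bd. apply cv_mult_bd; apply qpinf_cv; auto. apply cv_const.
    + apply cv_ext with (fun K => qpoch (c / a) p K * qpoch (c / b) p K * Fc K).
      intros; symmetry; apply Fc_iter.
      replace (qpinf (c / a) p * qpinf (c / b) p) with (qpinf (c / a) p * qpinf (c / b) p * 1) by ring.
      apply cv_mult_bd. apply cv_mult_bd; apply qpinf_cv; auto. apply Fc_lim.
Qed.

End Fix_c.
End QGauss.

Lemma fs_mul_r (f : nat -> C) c n : fs f n * c = fs (fun k => f k * c) n.
Proof. induction n; simpl. ring. rewrite <- IHn. ring. Qed.

Lemma Cmult_eq_reg_l (c x y : C) : c <> 0 -> c * x = c * y -> x = y.
Proof. intros Hc E. replace x with (/ c * (c * x)) by (field; auto). rewrite E. field; auto. Qed.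

Section RS.
Variable p : C.
Hypothesis Hp : (Cmod p < 1)%R.

Lemma qpp_nz' n : qpoch p p n <> 0.
Proof. apply qpoch_nz, qpp_nz; auto. Qed.

Lemma one_sub_pS_nz k : 1 - p * p ^ k <> 0.
Proof. intro E. apply (qpp_nz p Hp k). replace (p * p ^ k) with (1 - (1 - p * p ^ k)) by ring. rewrite E. ring. Qed.

Definition H (N : nat) (x : C) : C := fs (fun i => x ^ i / (qpoch p p i * qpoch p p (N - i))) (S N).

Lemma H_A N x : (1 - p ^ S N) * H (S N) x = x * H N x + H N (p * x).
Proof.
  unfold H.
  rewrite (Cmult_comm (1 - p ^ S N)), fs_mul_r.
  rewrite (fs_ext _ (fun i => x ^ i * (1 - p ^ i) / (qpoch p p i * qpoch p p (S N - i))
                              + (p * x) ^ i * (1 - p ^ (S N - i)) / (qpoch p p i * qpoch p p (S N - i)))).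
  2:{ intros i Hi. rewrite Cpow_mult_l.
      replace (p ^ S N) with (p ^ i * p ^ (S N - i)) by (rewrite <- Cpow_add_r; f_equal; lia).
      field. split; apply qpp_nz'. }
  rewrite fs_add. f_equal.
  - rewrite fs_shift. simpl (x ^ 0). replace (1 - p ^ 0) with (0:C) by (simpl; ring).
    rewrite (Cmult_comm x), fs_mul_r.
    rewrite (fs_ext _ (fun i => x ^ i / (qpoch p p i * qpoch p p (N - i)) * x)).
    field; split; apply qpp_nz'.
    intros i Hi. rewrite qpoch_S, !Cpow_S. replace (S N - S i)%nat with (N - i)%nat by lia.
    assert (1 - p * p ^ i <> 0) by apply one_sub_pS_nz.
    field. repeat split; auto; apply qpp_nz'.
  - rewrite fs_S. replace (S N - S N)%nat with O by lia. replace (1 - p ^ 0) with (0:C) by (simpl; ring).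
    rewrite (fs_ext _ (fun i => (p * x) ^ i / (qpoch p p i * qpoch p p (N - i)))).
    field; split; apply qpp_nz'.
    intros i Hi. replace (S N - i)%nat with (S (N - i)) by lia. rewrite qpoch_S.
    replace (p ^ S (N - i)) with (p * p ^ (N - i)) by reflexivity.
    assert (1 - p * p ^ (N - i) <> 0) by apply one_sub_pS_nz.
    field. repeat split; auto; apply qpp_nz'.
Qed.

Lemma H_B N y : (1 - p ^ S N) * H (S N) (p * y) = H N (p * y) + y * p ^ S N * H N y.
Proof.
  unfold H.
  rewrite (Cmult_comm (1 - p ^ S N)), fs_mul_r.
  rewrite (fs_ext _ (fun i => (p * y) ^ i * (1 - p ^ (S N - i)) / (qpoch p p i * qpoch p p (S N - i))
                              + (p * y) ^ i * p ^ (S N - i) * (1 - p ^ i) / (qpoch p p i * qpoch p p (S N - i)))).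
  2:{ intros i Hi.
      replace (p ^ S N) with (p ^ i * p ^ (S N - i)) by (rewrite <- Cpow_add_r; f_equal; lia).
      field. split; apply qpp_nz'. }
  rewrite fs_add. f_equal.
  - rewrite fs_S. replace (S N - S N)%nat with O by lia. replace (1 - p ^ 0) with (0:C) by (simpl; ring).
    rewrite (fs_ext _ (fun i => (p * y) ^ i / (qpoch p p i * qpoch p p (N - i)))).
    field; split; apply qpp_nz'.
    intros i Hi. replace (S N - i)%nat with (S (N - i)) by lia. rewrite qpoch_S.
    replace (p ^ S (N - i)) with (p * p ^ (N - i)) by reflexivity.
    assert (1 - p * p ^ (N - i) <> 0) by apply one_sub_pS_nz.
    field. repeat split; auto; apply qpp_nz'.
  - rewrite fs_shift. replace (1 - p ^ 0) with (0:C) by (simpl; ring).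
    rewrite (Cmult_comm (y * p ^ S N)), fs_mul_r.
    rewrite (fs_ext _ (fun i => y ^ i / (qpoch p p i * qpoch p p (N - i)) * (y * p ^ S N))).
    field; split; apply qpp_nz'.
    intros i Hi. rewrite qpoch_S. replace (S N - S i)%nat with (N - i)%nat by lia.
    rewrite !Cpow_mult_l.
    replace (p ^ S N) with (p ^ S i * p ^ (N - i)) by (rewrite <- Cpow_add_r; f_equal; lia).
    rewrite !Cpow_S.
    assert (1 - p * p ^ i <> 0) by apply one_sub_pS_nz.
    field. repeat split; auto; apply qpp_nz'.
Qed.

Lemma H_rec N x : (1 - p ^ S (S N)) * H (S (S N)) x = (1 + x) * H (S N) x - x * H N x.
Proof.
  assert (A1 := H_A (S N) x). assert (A0 := H_A N x). assert (B0 := H_B N x).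
  assert (Hn : 1 - p ^ S N <> 0) by apply one_sub_pS_nz.
  apply (Cmult_eq_reg_l (1 - p ^ S N)); auto.
  transitivity (x * ((1 - p ^ S N) * H (S N) x) + ((1 - p ^ S N) * H (S N) (p * x))).
  { rewrite A1. ring. }
  rewrite B0, A0.
  replace (H N (p * x)) with ((1 - p ^ S N) * H (S N) x - x * H N x) by (rewrite A0; ring).
  ring.
Qed.

End RS.

Section RSq.
Variable q : C.
Hypothesis Hq : (Cmod q < 1)%R.

Lemma Hq2 : (Cmod (q ^ 2) < 1)%R.
Proof. rewrite Cmod_pow. assert (0 <= Cmod q)%R by apply Cmod_ge_0. simpl. nra. Qed.

Lemma q2pow N : (q ^ 2) ^ N = ((- q) ^ N) * ((- q) ^ N).
Proof. rewrite <- Cpow_mult_l. rewrite <- Cpow_mult_r. replace (- q * - q) with ((q ^ 2)) by (simpl; ring).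
  rewrite Cpow_mult_r. reflexivity. Qed.

Lemma Q_rec N : qpoch q (-q) (S (S N)) = (1 - q) * qpoch q (-q) (S N) + q * (1 - (q^2) ^ S N) * qpoch q (-q) N.
Proof.
  rewrite !qpoch_S. rewrite (Cpow_S (-q) N), (Cpow_S (q ^ 2) N), q2pow. set (e := (- q) ^ N). simpl (q ^ 2). ring.
Qed.

Lemma H_closed N : H (q ^ 2) N (- q) = qpoch q (- q) N / qpoch (q ^ 2) (q ^ 2) N.
Proof.
  assert (Hp := Hq2). set (p := q ^ 2) in *.
  assert (forall N, H p N (- q) = qpoch q (- q) N / qpoch p p N /\ H p (S N) (- q) = qpoch q (- q) (S N) / qpoch p p (S N)).
  { induction N0.
    - assert (Z := one_sub_pS_nz p Hp 0). 
      unfold H. cbn [fs Nat.sub]. rewrite !qpoch_S, !qpoch_0. cbn [Cpow] in *. split. field.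
      field. change ((1:C) - p <> 0). replace (1 - p) with (1 - p * 1) by ring. exact Z.
    - destruct IHN0 as [I1 I2]. split; auto.
      apply (Cmult_eq_reg_l (1 - p ^ S (S N0))). apply one_sub_pS_nz; auto.
      rewrite H_rec by auto. rewrite I1, I2. rewrite Q_rec. fold p.
      rewrite !(qpoch_S p p (S N0)), !(qpoch_S p p N0).
      assert (1 - p * p ^ N0 <> 0) by (apply one_sub_pS_nz; auto).
      assert (1 - p * p ^ S N0 <> 0) by (apply one_sub_pS_nz; auto).
      assert (qpoch p p N0 <> 0) by (apply qpp_nz'; auto).
      rewrite !Cpow_S. field. auto. }
  apply H0.
Qed.

Lemma Q_even n : qpoch q (- q) (2 * n) * qpoch (- q) (q ^ 2) n * qpoch (q ^ 2) (q ^ 2) n = qpoch (q ^ 2) (q ^ 2) (2 * n).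
Proof.
  induction n. simpl. ring.
  replace (2 * S n)%nat with (S (S (2 * n))) by lia.
  rewrite !qpoch_S. rewrite <- IHn.
  rewrite (Cpow_S (- q) (2 * n)), (Cpow_S (q ^ 2) (2 * n)).
  replace (2 * n)%nat with (n + n)%nat by lia. rewrite !Cpow_add_r, !q2pow.
  set (e := (- q) ^ n). simpl (q ^ 2). ring.
Qed.

End RSq.

Lemma zpowC_diff (x : C) (A B : nat) : x <> 0 -> zpowC x (Z.of_nat A - Z.of_nat B) = x ^ A / x ^ B.
Proof.
  intros Hx. unfold zpowC. destruct (Z.leb_spec 0 (Z.of_nat A - Z.of_nat B)).
  - replace (Z.of_nat A - Z.of_nat B)%Z with (Z.of_nat (A - B)) by lia. rewrite Nat2Z.id, pow_n_Cpow.
    replace A with ((A - B) + B)%nat at 2 by lia. rewrite Cpow_add_r. field. apply Cpow_nz; auto.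
  - replace (- (Z.of_nat A - Z.of_nat B))%Z with (Z.of_nat (B - A)) by lia. rewrite Nat2Z.id, pow_n_Cpow.
    replace B with ((B - A) + A)%nat at 2 by lia. rewrite Cpow_add_r. field. split; apply Cpow_nz; auto.
Qed.

Lemma m1_nz : (-1 : C) <> 0.
Proof. intro E. apply C1_neq_0. replace (1:C) with (- (-1) : C) by ring. rewrite E. ring. Qed.

Lemma m1pow_sq m : (-1 : C) ^ m * (-1) ^ m = 1.
Proof. rewrite <- Cpow_mult_l. replace (-1 * -1 : C) with (1:C) by ring. apply Cpow_1_l. Qed.

Lemma m1pow_inv m : / ((-1 : C) ^ m) = (-1) ^ m.
Proof.
  assert (Hz : (-1 : C) ^ m <> 0) by (apply Cpow_nz, m1_nz).
  apply (Cmult_eq_reg_l ((-1) ^ m)); auto. rewrite m1pow_sq. field. auto.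
Qed.

Lemma Cdiv_plus_distr' (a b c : C) : (a + b) / c = a / c + b / c.
Proof. unfold Cdiv. ring. Qed.

Lemma fs_div (f : nat -> C) c n : fs f n / c = fs (fun k => f k / c) n.
Proof. unfold Cdiv. rewrite fs_mul_r. reflexivity. Qed.

Definition ce (e : nat) : C := match e with O => 1 | _ => 2 end.

Definition Ie (q : C) (r : nat) : C :=
  fs (fun e => ce e * (-1) ^ e * q ^ ((r - e) * (r + e))) (S r) / q ^ r.

Lemma inner_sum_Ie (q : C) (r : nat) : q <> 0 -> inner_sum q r = Ie q r.
Proof.
  intros Hq. unfold inner_sum. rewrite sum_n_fs.
  rewrite (fs_ext _ (fun k => (-1) ^ k / (-1) ^ r * (q ^ (k * (2 * r - k)) / q ^ r))).
  2:{ intros k Hk. cbv beta zeta. rewrite zpowC_diff by apply m1_nz.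
      replace (Z.of_nat r * Z.of_nat r - Z.of_nat r - (Z.of_nat k - Z.of_nat r) * (Z.of_nat k - Z.of_nat r))%Z
        with (Z.of_nat (k * (2 * r - k)) - Z.of_nat r)%Z.
      rewrite zpowC_diff. reflexivity. exact Hq.
      assert (Hm : exists m, (2 * r - k)%nat = m /\ (k + m = 2 * r)%nat) by (exists (2*r-k)%nat; lia).
      destruct Hm as [m [Hm1 Hm2]]. rewrite Hm1. rewrite Nat2Z.inj_mul.
      assert (Hkm : (Z.of_nat m = 2 * Z.of_nat r - Z.of_nat k)%Z) by lia. rewrite Hkm. ring. }
  rewrite fs_fold. unfold Ie. rewrite fs_shift.
  rewrite Cdiv_plus_distr', fs_div.
  f_equal.
  - replace (r * (2 * r - r))%nat with ((r - 0) * (r + 0))%nat by (f_equal; lia).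
    simpl ce. simpl ((-1 : C) ^ 0). field. split. apply Cpow_nz; auto. apply Cpow_nz, m1_nz.
  - apply fs_ext. intros d Hd.
    assert (Hm := Cpow_nz (-1) r m1_nz). assert (Hq' := Cpow_nz q r Hq).
    replace (S r + d)%nat with (r + S d)%nat by lia.
    replace ((r + S d) * (2 * r - (r + S d)))%nat with ((r - S d) * (r + S d))%nat by (rewrite Nat.mul_comm; f_equal; lia).
    replace ((r - S d) * (2 * r - (r - S d)))%nat with ((r - S d) * (r + S d))%nat by (f_equal; lia).
    rewrite Cpow_add_r.
    replace ((-1 : C) ^ r) with ((-1) ^ (r - S d) * (-1) ^ (S d)) at 3 by (rewrite <- Cpow_add_r; f_equal; lia).
    assert (Hs := m1pow_inv (S d)). simpl ce.
    assert (Hm2 : (-1 : C) ^ (r - S d) <> 0) by (apply Cpow_nz, m1_nz).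
    assert (Hm3 : (-1 : C) ^ (S d) <> 0) by (apply Cpow_nz, m1_nz).
    replace ((-1) ^ (r - S d) / ((-1) ^ (r - S d) * (-1) ^ S d)) with (/ (-1) ^ S d) by (field; auto).
    rewrite Hs. field. auto.
Qed.

Lemma onep_nz (p : C) n : (Cmod p < 1)%R -> 1 + p ^ n <> 0.
Proof.
  intros Hp E. destruct n.
  - simpl in E. apply C1_neq_0. replace (1:C) with ((1 + 1) / 2) by (field; intro H2; apply (f_equal fst) in H2; simpl in H2; lra).
    rewrite E. unfold Cdiv. ring.
  - assert (Hm := Cpow_lt1 p n Hp). replace (p ^ S n) with (- (1)) in Hm.
    rewrite Cmod_opp, Cmod_1 in Hm. lra.
    replace (p ^ S n) with (1 + p ^ S n - 1) by ring. rewrite E. ring.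
Qed.

Section Tele.
Variable q : C.
Hypotheses (Hq0 : q <> 0) (Hq : (Cmod q < 1)%R).
Let p := q ^ 2.
Let Hp : (Cmod p < 1)%R := Hq2 q Hq.

Definition vt n e r := (1 - p ^ (2 * r + 1)) * q ^ ((r - e) * (r + e)) / (q ^ r * qpoch p p (n - r) * qpoch p p (n + r + 1)).
Definition Wt n e r := (1 + p ^ r) * q ^ ((r - e) * (r + e)) / ((1 + p ^ n) * q ^ r * qpoch p p (n - r) * qpoch p p (n + r)).

Lemma tele_step n e r : (e <= r)%nat -> (r < n)%nat -> Wt n e r - Wt n e (S r) = vt n e r.
Proof.
  intros H1 H2. unfold Wt, vt.
  destruct (Nat.le_exists_sub e r H1) as [t [Ht _]]. subst r.
  replace ((S (t + e) - e) * (S (t + e) + e))%nat with ((t + e - e) * (t + e + e) + (2 * (t + e) + 1))%nat.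
  2:{ replace (S (t + e) - e)%nat with (S t) by lia. replace (t + e - e)%nat with t by lia. nia. }
  set (r := (t + e)%nat) in *.
  destruct (Nat.le_exists_sub (S r) n H2) as [u [Hu _]]. subst n.
  replace (u + S r - r)%nat with (S u) by lia. replace (u + S r - S r)%nat with u by lia.
  replace (u + S r + S r)%nat with (S (u + S r + r)) by lia. replace (u + S r + r + 1)%nat with (S (u + S r + r)) by lia.
  rewrite !qpoch_S.
  assert (E1 : q ^ ((r - e) * (r + e) + (2 * r + 1)) = q ^ ((r - e) * (r + e)) * q * p ^ r).
  { rewrite !Cpow_add_r. unfold p. rewrite <- Cpow_mult_r. simpl (q ^ 1). ring. }
  assert (E2 : p ^ (2 * r + 1) = p * (p ^ r * p ^ r)).
  { replace (2 * r + 1)%nat with (S (r + r)) by lia. rewrite Cpow_S, Cpow_add_r. ring. }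
  assert (E3 : p ^ (u + S r) = p ^ u * (p * p ^ r)) by (rewrite Cpow_add_r, Cpow_S; ring).
  assert (E4 : p ^ (u + S r + r) = p ^ u * (p * p ^ r) * p ^ r) by (rewrite !Cpow_add_r, Cpow_S; ring).
  assert (E5 : q ^ S r = q * q ^ r) by apply Cpow_S.
  assert (E6 : p ^ S r = p * p ^ r) by apply Cpow_S.
  rewrite E1, E2, E3, E4, E5, E6.
  assert (Hs : q ^ r <> 0) by (apply Cpow_nz; auto).
  assert (Hy : q ^ ((r - e) * (r + e)) <> 0) by (apply Cpow_nz; auto).
  assert (N1 : qpoch p p u <> 0) by (apply qpp_nz'; auto).
  assert (N2 : qpoch p p (u + S r + r) <> 0) by (apply qpp_nz'; auto).
  assert (N3 : 1 - p * p ^ u <> 0) by (apply one_sub_pS_nz; auto).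
  assert (N4 : 1 - p * p ^ (u + S r + r) <> 0) by (apply one_sub_pS_nz; auto).
  assert (N5 : 1 + p ^ (u + S r) <> 0) by (apply onep_nz; auto).
  rewrite E3 in N5. rewrite E4 in N4.
  set (A := p ^ r) in *. set (B := p ^ u) in *. set (y := q ^ ((r - e) * (r + e))) in *. set (s := q ^ r) in *.
  unfold p in *. simpl (q ^ 2) in *.
  field. repeat split; auto.
  all: replace (q * q) with (q * (q * 1)) by ring; auto.
Qed.

Lemma tele_end n e : vt n e n = Wt n e n.
Proof.
  unfold vt, Wt. replace (n - n)%nat with O by lia. replace (n + n + 1)%nat with (S (n + n)) by lia.
  rewrite qpoch_S. replace (2 * n + 1)%nat with (S (n + n)) by lia. rewrite Cpow_S.
  assert (Hs : q ^ n <> 0) by (apply Cpow_nz; auto).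
  assert (N2 : qpoch p p (n + n) <> 0) by (apply qpp_nz'; auto).
  assert (N4 : 1 - p * p ^ (n + n) <> 0) by (apply one_sub_pS_nz; auto).
  assert (N5 : 1 + p ^ n <> 0) by (apply onep_nz; auto).
  rewrite qpoch_0. field. repeat split; auto.
Qed.

Lemma tele_sum n e : (e <= n)%nat -> fs (fun m => vt n e (m + e)) (S n - e) = Wt n e e.
Proof.
  intros He.
  assert (G : forall k, (e + k <= n)%nat -> fs (fun m => vt n e (m + e)) k = Wt n e e - Wt n e (e + k)).
  { induction k; intros Hk. simpl. rewrite Nat.add_0_r. ring.
    rewrite fs_S, IHk by lia. rewrite <- tele_step by lia. rewrite Nat.add_succ_r. rewrite (Nat.add_comm k e). ring. }
  replace (S n - e)%nat with (S (n - e)) by lia. rewrite fs_S, G by lia.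
  replace (e + (n - e))%nat with n by lia. replace (n - e + e)%nat with n by lia. rewrite tele_end. ring.
Qed.

End Tele.

Section LemmaE.
Variable q : C.
Hypotheses (Hq0 : q <> 0) (Hq : (Cmod q < 1)%R).
Let p := q ^ 2.
Let Hp : (Cmod p < 1)%R := Hq2 q Hq.

Definition Bsum n := fs (fun r => (1 - p ^ (2 * r + 1)) * inner_sum q r / (qpoch p p (n - r) * qpoch p p (n + r + 1))) (S n).

Lemma Bsum_We n : Bsum n = fs (fun e => ce e * (-1) ^ e * Wt q n e e) (S n).
Proof.
  unfold Bsum.
  rewrite (fs_ext _ (fun r => fs (fun e => ce e * (-1) ^ e * vt q n e r) (S r))).
  2:{ intros r Hr. rewrite inner_sum_Ie by auto. unfold Ie.
      assert (Hs : q ^ r <> 0) by (apply Cpow_nz; auto).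
      assert (N1 : qpoch p p (n - r) <> 0) by (apply qpp_nz'; auto).
      assert (N2 : qpoch p p (n + r + 1) <> 0) by (apply qpp_nz'; auto).
      transitivity (fs (fun e => ce e * (-1) ^ e * q ^ ((r - e) * (r + e))) (S r) *
                    ((1 - p ^ (2 * r + 1)) / (q ^ r * qpoch p p (n - r) * qpoch p p (n + r + 1)))).
      { field. repeat split; auto. }
      rewrite fs_mul_r. apply fs_ext. intros e He. unfold vt. fold p. field. repeat split; auto. }
  rewrite (fs_swap (fun r e => ce e * (-1) ^ e * vt q n e r)).
  apply fs_ext. intros e He.
  rewrite (fs_scal (ce e * (-1) ^ e) (fun m => vt q n e (m + e))). rewrite tele_sum by (auto; lia). reflexivity.
Qed.

Lemma qm_nz n : qpoch (- q) p n <> 0.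
Proof.
  apply qpoch_nz. intros k. apply Cmod_lt1_neq1. rewrite Cmod_mult, Cmod_opp, Cmod_pow.
  assert (0 <= Cmod p)%R by apply Cmod_ge_0. assert (Cmod p ^ k <= 1)%R by (apply pow_le1; lra).
  assert (0 <= Cmod q)%R by apply Cmod_ge_0. nra.
Qed.

Lemma H_even n : H p (2 * n) (- q) = 1 / (qpoch (- q) p n * qpoch p p n).
Proof.
  unfold p. rewrite H_closed by auto. rewrite <- (Q_even q n). fold p.
  assert (N1 := qm_nz n). assert (N2 : qpoch p p n <> 0) by (apply qpp_nz'; auto).
  assert (N3 : qpoch q (- q) (2 * n) <> 0).
  { intro E. assert (E2 := Q_even q n). fold p in E2. rewrite E in E2.
    apply (qpp_nz' p Hp (2 * n)). rewrite <- E2. ring. }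
  field. repeat split; auto.
Qed.

Lemma H_fold n : H p (2 * n) (- q) = (- q) ^ n * (1 + p ^ n) / 2 * fs (fun e => ce e * (-1) ^ e * Wt q n e e) (S n).
Proof.
  unfold H. rewrite fs_fold. rewrite fs_shift.
  assert (N5 : 1 + p ^ n <> 0) by (apply onep_nz; auto).
  assert (Nn : qpoch p p n <> 0) by (apply qpp_nz'; auto).
  assert (H2 : (2:C) <> 0) by (intro H2; apply (f_equal fst) in H2; simpl in H2; lra).
  rewrite Cmult_plus_distr_l. f_equal.
  - unfold Wt. fold p. replace (2 * n - n)%nat with n by lia. replace (n - 0)%nat with n by lia.
    replace (n + 0)%nat with n by lia. simpl ((0 - 0) * (0 + 0))%nat. simpl ce. cbn [Cpow].
    field. repeat split; auto.
  - rewrite <- fs_scal. apply fs_ext. intros d Hd.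
    replace (S n + d)%nat with (n + S d)%nat by lia.
    replace (2 * n - (n + S d))%nat with (n - S d)%nat by lia.
    replace (2 * n - (n - S d))%nat with (n + S d)%nat by lia.
    unfold Wt. fold p. replace ((S d - S d) * (S d + S d))%nat with O by lia. simpl ce.
    set (M := (-1 : C) ^ S d).
    assert (HM : M * M = 1) by apply m1pow_sq.
    assert (HM0 : M <> 0) by (apply Cpow_nz, m1_nz).
    assert (Hs : q ^ S d <> 0) by (apply Cpow_nz; auto).
    assert (E1 : (- q) ^ (n + S d) = (- q) ^ n * M * q ^ S d).
    { rewrite Cpow_add_r. unfold M. rewrite <- Cmult_assoc, <- Cpow_mult_l. f_equal. f_equal. ring. }
    assert (E2 : (- q) ^ (n - S d) = (- q) ^ n * M / q ^ S d).
    { assert (E3 : (- q) ^ n = (- q) ^ (n - S d) * (M * q ^ S d)).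
      { replace n with ((n - S d) + S d)%nat at 1 by lia. rewrite Cpow_add_r. unfold M. rewrite <- Cpow_mult_l. f_equal. f_equal. ring. }
      rewrite E3. transitivity ((- q) ^ (n - S d) * (M * M)). rewrite HM; ring. field; auto. }
    assert (E4 : p ^ S d = q ^ S d * q ^ S d).
    { unfold p. rewrite <- Cpow_mult_r, <- Cpow_add_r. f_equal. lia. }
    rewrite E1, E2, E4.
    assert (N1 : qpoch p p (n - S d) <> 0) by (apply qpp_nz'; auto).
    assert (N2 : qpoch p p (n + S d) <> 0) by (apply qpp_nz'; auto).
    cbn [Cpow]. field. repeat split; auto.
    all: try (apply Cpow_nz; auto).
Qed.

Lemma lemmaE n : Bsum n = 2 / ((- q) ^ n * (1 + p ^ n) * qpoch (- q) p n * qpoch p p n).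
Proof.
  rewrite Bsum_We.
  assert (E := H_fold n). rewrite H_even in E.
  assert (N5 : 1 + p ^ n <> 0) by (apply onep_nz; auto).
  assert (Nn : qpoch p p n <> 0) by (apply qpp_nz'; auto).
  assert (Nm := qm_nz n).
  assert (Nq : (- q) ^ n <> 0) by (apply Cpow_nz; intro E'; apply Hq0; replace q with (- - q) by ring; rewrite E'; ring).
  assert (H2 : (2:C) <> 0) by (intro H2; apply (f_equal fst) in H2; simpl in H2; lra).
  set (X := fs (fun e => ce e * (-1) ^ e * Wt q n e e) (S n)) in *.
  apply (Cmult_eq_reg_l ((- q) ^ n * (1 + p ^ n) / 2)).
  { unfold Cdiv. repeat apply Cmult_neq_0; auto.
    intro Z; apply C1_neq_0; replace (1:C) with (2 * / 2) by (field; auto); rewrite Z; ring. }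
  rewrite <- E. field. repeat split; auto.
Qed.
End LemmaE.

Lemma Cinv_neq_0 (x : C) : x <> 0 -> / x <> 0.
Proof. intros H E. apply C1_neq_0. replace (1:C) with (x * / x) by (field; auto). rewrite E. ring. Qed.

Lemma C2_nz : (2:C) <> 0.
Proof. intro H2. apply (f_equal fst) in H2. simpl in H2. lra. Qed.

Lemma cv_sub_shift (F : nat -> C) L r : cv F L -> cv (fun N => F (N - r)%nat) L.
Proof. intros H eps Heps. destruct (H eps Heps) as [N HN]. exists (N + r)%nat. intros. apply HN. lia. Qed.

Lemma pow_le_mono (rho : R) a b : (0 <= rho <= 1)%R -> (a <= b)%nat -> (rho ^ b <= rho ^ a)%R.
Proof.
  intros Hr Hab. replace b with (a + (b - a))%nat by lia. rewrite pow_add.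
  assert (0 <= rho ^ a)%R by (apply pow_le; lra).
  assert (rho ^ (b - a) <= 1)%R by (apply pow_le1; lra). nra.
Qed.

Lemma fs_bound_rev (f : nat -> C) (D rho : R) r : (0 <= rho < 1)%R ->
  (forall e, (e <= r)%nat -> (Cmod (f e) <= D * rho ^ (r - e))%R) ->
  (Cmod (fs f (S r)) <= D * (1 - rho ^ (S r)) / (1 - rho))%R.
Proof.
  revert f. induction r; intros f Hr Hb.
  - simpl fs. rewrite Cplus_0_l. specialize (Hb O (le_n _)). simpl in Hb |- *.
    replace (D * (1 - rho * 1) / (1 - rho))%R with (D * 1)%R by (field; lra). lra.
  - rewrite fs_shift. eapply Rle_trans. apply Cmod_triangle.
    assert (A := IHr (fun k => f (S k)) Hr). simpl in A.
    assert (B : (Cmod (fs (fun k => f (S k)) (S r)) <= D * (1 - rho ^ S r) / (1 - rho))%R).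
    { apply A. intros e He. replace (r - e)%nat with (S r - S e)%nat by lia. apply Hb. lia. }
    specialize (Hb O ltac:(lia)). replace (S r - 0)%nat with (S r) in Hb by lia.
    replace (D * (1 - rho ^ S (S r)) / (1 - rho))%R with (D * rho ^ S r + D * (1 - rho ^ S r) / (1 - rho))%R.
    lra. simpl. field. lra.
Qed.

Lemma fs_bound_rev' (f : nat -> C) (D rho : R) r : (0 <= rho < 1)%R ->
  (forall e, (e <= r)%nat -> (Cmod (f e) <= D * rho ^ (r - e))%R) ->
  (Cmod (fs f (S r)) <= D / (1 - rho))%R.
Proof.
  intros Hr Hb. eapply Rle_trans. apply fs_bound_rev; eauto.
  assert (HD : (0 <= D)%R).
  { specialize (Hb r (le_n _)). replace (r - r)%nat with O in Hb by lia. simpl in Hb.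
    generalize (Cmod_ge_0 (f r)). lra. }
  assert (0 <= rho ^ S r)%R by (apply pow_le; lra).
  unfold Rdiv. apply Rmult_le_compat_r. left; apply Rinv_0_lt_compat; lra. nra.
Qed.

Lemma Cmod_m1' : Cmod (-1) = 1%R.
Proof. rewrite Cmod_R. unfold Rabs. destruct (Rcase_abs _); lra. Qed.

Lemma Cmod_2 : Cmod 2 = 2%R.
Proof. rewrite Cmod_R. unfold Rabs. destruct (Rcase_abs _); lra. Qed.

Lemma inner_bound (q : C) r : q <> 0 -> (Cmod q < 1)%R ->
  (Cmod (inner_sum q r) <= 2 / (1 - Cmod q) / Cmod q ^ r)%R.
Proof.
  intros Hq0 Hq. rewrite inner_sum_Ie by auto. unfold Ie.
  assert (Hqp : (0 < Cmod q)%R) by (apply Cmod_pos_nz; auto).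
  rewrite Cmod_div by (apply Cpow_nz; auto). rewrite Cmod_pow.
  unfold Rdiv at 2. apply Rmult_le_compat_r. left. apply Rinv_0_lt_compat. apply pow_lt; auto.
  apply fs_bound_rev'. split; [apply Cmod_ge_0|auto].
  intros e He. rewrite !Cmod_mult, !Cmod_pow, Cmod_m1', pow1.
  assert (Hc : (Cmod (ce e) <= 2)%R).
  { destruct e; simpl. rewrite Cmod_1. lra. rewrite Cmod_2. lra. }
  assert (Hp : (Cmod q ^ ((r - e) * (r + e)) <= Cmod q ^ (r - e))%R).
  { apply pow_le_mono. split; [apply Cmod_ge_0|lra]. nia. }
  assert (0 <= Cmod q ^ ((r - e) * (r + e)))%R by (apply pow_le, Cmod_ge_0).
  generalize (Cmod_ge_0 (ce e)). nra.
Qed.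

Section Main.
Variables q a c : C.
Hypotheses (Hq0 : q <> 0) (Hq : (Cmod q < 1)%R) (Ha : a <> 0) (Hc : c <> 0)
  (Hqa : forall k : nat, q ^ 2 * a * (q ^ 2) ^ k <> 1)
  (Hqc : forall k : nat, q ^ 2 * c * (q ^ 2) ^ k <> 1)
  (Hz : (Cmod (a * c) < Cmod q)%R).

Let p := q ^ 2.
Let Hp : (Cmod p < 1)%R := Hq2 q Hq.
Let z := a * c.

Lemma p_nz : p <> 0.
Proof. unfold p. apply Cpow_nz; auto. Qed.

Lemma z_lt1 : (Cmod z < 1)%R.
Proof. unfold z. lra. Qed.

Definition rho n := qpoch (p / a) p n * qpoch (p / c) p n.

Definition X n r := rho n * z ^ n * ((1 - p ^ (2 * r + 1)) * inner_sum q r / (qpoch p p (n - r) * qpoch p p (n + r + 1))).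

Definition term2 n := qpoch (q ^ 2 / a) (q ^ 2) n * qpoch (q ^ 2 / c) (q ^ 2) n
        / ((1 + pow_n q (2 * n)) * (qpoch (- q) (q ^ 2) n * qpoch (q ^ 2) (q ^ 2) n))
        * pow_n (- (a * c / q)) n.

Definition term1 n := (1 - pow_n q (4 * n + 2))
        * (qpoch (q ^ 2 / a) (q ^ 2) n * qpoch (q ^ 2 / c) (q ^ 2) n
           / (qpoch (q ^ 2 * a) (q ^ 2) n * qpoch (q ^ 2 * c) (q ^ 2) n))
        * pow_n (a * c) n
        * inner_sum q n.

Lemma X_row n : fs (X n) (S n) = 2 * term2 n.
Proof.
  unfold X. rewrite (fs_scal (rho n * z ^ n) (fun r => (1 - p ^ (2 * r + 1)) * inner_sum q r / (qpoch p p (n - r) * qpoch p p (n + r + 1)))).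
  change (fs (fun r => (1 - p ^ (2 * r + 1)) * inner_sum q r / (qpoch p p (n - r) * qpoch p p (n + r + 1))) (S n)) with (Bsum q n).
  rewrite lemmaE by auto. unfold term2, rho. fold p. rewrite (pow_n_Cpow q (2 * n)), (pow_n_Cpow (- (a * c / q)) n).
  assert (E1 : q ^ (2 * n) = p ^ n) by (unfold p; apply Cpow_mult_r).
  assert (Hmq : - q <> 0) by (intro E; apply Hq0; replace q with (- - q) by ring; rewrite E; ring).
  assert (E2 : (- (a * c / q)) ^ n = z ^ n / (- q) ^ n).
  { replace (- (a * c / q)) with (z * / (- q)) by (unfold z; field; auto). rewrite Cpow_mult_l, Cpow_inv by auto. reflexivity. }
  rewrite E1, E2.
  assert (N5 : 1 + p ^ n <> 0) by (apply onep_nz; auto).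
  assert (Nn : qpoch p p n <> 0) by (apply qpp_nz'; auto).
  assert (Nm := qm_nz q Hq n). fold p in Nm.
  assert (Nq : (- q) ^ n <> 0) by (apply Cpow_nz; auto).
  field. repeat split; auto.
Qed.


Lemma X_bound : exists Dx, forall n r, (r <= n)%nat -> (Cmod (X n r) <= Dx * Cmod z ^ n / Cmod q ^ r)%R.
Proof.
  destruct (qpoch_lower p p Hp (qpp_nz p Hp)) as [dp [Hdp Hdp']].
  set (E1 := exp (Cmod (p / a) / (1 - Cmod p))). set (E2 := exp (Cmod (p / c) / (1 - Cmod p))).
  exists (E1 * E2 * 2 * (2 / (1 - Cmod q)) / (dp * dp))%R. intros n r Hr.
  assert (Hqp : (0 < Cmod q)%R) by (apply Cmod_pos_nz; auto).
  unfold X, rho.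
  assert (N1 : qpoch p p (n - r) <> 0) by (apply qpp_nz'; auto).
  assert (N2 : qpoch p p (n + r + 1) <> 0) by (apply qpp_nz'; auto).
  rewrite !Cmod_mult, Cmod_div, !Cmod_mult, Cmod_pow by (apply Cmult_neq_0; auto).
  assert (B1 : (Cmod (qpoch (p / a) p n) * Cmod (qpoch (p / c) p n) <= E1 * E2)%R).
  { apply Rmult_le_compat; try apply Cmod_ge_0; apply qpoch_upper; auto. }
  assert (B2 : (Cmod (1 - p ^ (2 * r + 1)) <= 2)%R).
  { eapply Rle_trans. apply Cmod_sub_le. rewrite Cmod_1, Cmod_pow.
    assert (Cmod p ^ (2 * r + 1) <= 1)%R by (apply pow_le1; split; [apply Cmod_ge_0|lra]). lra. }
  assert (B3 := inner_bound q r Hq0 Hq).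
  assert (B4 : (dp * dp <= Cmod (qpoch p p (n - r)) * Cmod (qpoch p p (n + r + 1)))%R).
  { apply Rmult_le_compat; lra || auto. }
  assert (Hzn : (0 <= Cmod z ^ n)%R) by (apply pow_le, Cmod_ge_0).
  assert (Hqr : (0 < Cmod q ^ r)%R) by (apply pow_lt; auto).
  assert (HE : (0 <= E1 * E2)%R) by (unfold E1, E2; apply Rmult_le_pos; left; apply exp_pos).
  set (A := (Cmod (qpoch (p / a) p n) * Cmod (qpoch (p / c) p n))%R) in *.
  set (Bq := Cmod (inner_sum q r)) in *.
  set (Cd := (Cmod (qpoch p p (n - r)) * Cmod (qpoch p p (n + r + 1)))%R) in *.
  set (P1 := Cmod (1 - p ^ (2 * r + 1))) in *.
  assert (HA : (0 <= A)%R) by (unfold A; apply Rmult_le_pos; apply Cmod_ge_0).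
  assert (HB : (0 <= Bq)%R) by apply Cmod_ge_0.
  assert (HP1 : (0 <= P1)%R) by apply Cmod_ge_0.
  assert (Hdd : (0 < dp * dp)%R) by nra.
  assert (L1 : (P1 * Bq <= 2 * (2 / (1 - Cmod q) / Cmod q ^ r))%R) by (apply Rmult_le_compat; auto).
  assert (L2 : (/ Cd <= / (dp * dp))%R) by (apply Rinv_le_contravar; auto).
  assert (HCd : (0 < Cd)%R) by lra.
  replace (A * Cmod z ^ n * (P1 * Bq / Cd))%R with ((A * (P1 * Bq) * / Cd) * Cmod z ^ n)%R by (field; lra).
  replace (E1 * E2 * 2 * (2 / (1 - Cmod q)) / (dp * dp) * Cmod z ^ n / Cmod q ^ r)%R
    with (((E1 * E2) * (2 * (2 / (1 - Cmod q) / Cmod q ^ r)) * / (dp * dp)) * Cmod z ^ n)%R by (field; lra).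
  apply Rmult_le_compat_r; auto.
  apply Rmult_le_compat; auto.
  apply Rmult_le_pos; auto. apply Rmult_le_pos; auto.
  left; apply Rinv_0_lt_compat; auto.
  apply Rmult_le_compat; auto. apply Rmult_le_pos; auto.
Qed.


Lemma col_cv r : exists Lr, cv (fs (fun m => X (m + r) r)) Lr /\
   Lr * (qpinf p p * qpinf z p) = qpinf (p * a) p * qpinf (p * c) p * term1 r.
Proof.
  assert (Hp0 := p_nz).
  assert (Hpr : p ^ r <> 0) by (apply Cpow_nz; auto).
  set (a' := p / a * p ^ r). set (b' := p / c * p ^ r). set (c' := p * p ^ (2 * r + 1)).
  assert (Ha' : a' <> 0) by (unfold a'; apply Cmult_neq_0; auto; unfold Cdiv; apply Cmult_neq_0; auto; apply Cinv_neq_0; auto).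
  assert (Hb' : b' <> 0) by (unfold b'; apply Cmult_neq_0; auto; unfold Cdiv; apply Cmult_neq_0; auto; apply Cinv_neq_0; auto).
  assert (Hc' : forall k, c' * p ^ k <> 1).
  { intros k. apply Cmod_lt1_neq1. unfold c'. rewrite <- Cmult_assoc, <- Cpow_add_r, <- Cpow_S. apply Cpow_lt1; auto. }
  assert (Ez : c' / (a' * b') = z).
  { unfold c', a', b', z. replace (2 * r + 1)%nat with (S (r + r)) by lia. rewrite Cpow_S, Cpow_add_r. field. repeat split; auto. }
  assert (Hcab : (Cmod (c' / (a' * b')) < 1)%R) by (rewrite Ez; apply z_lt1).
  destruct (qgauss_main a' b' p Hp Ha' Hb' c' Hc' Hcab) as [L [HL HG]].
  set (Kr := rho r * z ^ r * (1 - p ^ (2 * r + 1)) * inner_sum q r / qpoch p p (2 * r + 1)).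
  assert (NK : qpoch p p (2 * r + 1) <> 0) by (apply qpp_nz'; auto).
  exists (Kr * L). split.
  - apply cv_ext with (fun N => Kr * fs (tg a' b' p c') N).
    + intros N. rewrite <- fs_scal. apply fs_ext. intros m _. unfold X, tg, Kr, rho.
      rewrite Ez. replace (m + r - r)%nat with m by lia.
      replace (m + r + r + 1)%nat with ((2 * r + 1) + m)%nat by lia.
      replace (m + r)%nat with (r + m)%nat by lia.
      rewrite (qpoch_add (p / a) p r m), (qpoch_add (p / c) p r m), (qpoch_add p p (2 * r + 1) m), (Cpow_add_r z r m). fold a' b' c'.
      assert (N1 : qpoch p p m <> 0) by (apply qpp_nz'; auto).
      assert (N2 : qpoch c' p m <> 0) by (apply qpoch_nz; auto).
      field. repeat split; auto.
    + apply cv_scal. auto.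
  - rewrite Ez in HG.
    replace (c' / a') with (p * a * p ^ r) in HG by (unfold c', a'; replace (2 * r + 1)%nat with (S (r + r)) by lia; rewrite Cpow_S, Cpow_add_r; field; repeat split; auto).
    replace (c' / b') with (p * c * p ^ r) in HG by (unfold c', b'; replace (2 * r + 1)%nat with (S (r + r)) by lia; rewrite Cpow_S, Cpow_add_r; field; repeat split; auto).
    rewrite (qpinf_split p p (2 * r + 1)) by auto. fold c'.
    rewrite (qpinf_split (p * a) p r), (qpinf_split (p * c) p r) by auto.
    transitivity (Kr * qpoch p p (2 * r + 1) * (qpinf c' p * qpinf z p * L)). ring.
    rewrite HG. unfold Kr, term1, rho. fold p.
    rewrite (pow_n_Cpow q (4 * r + 2)), (pow_n_Cpow (a * c) r). fold z.
    replace (q ^ (4 * r + 2)) with (p ^ (2 * r + 1)) by (unfold p; rewrite <- Cpow_mult_r; f_equal; lia).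
    assert (N3 : qpoch (p * a) p r <> 0) by (apply qpoch_nz; auto).
    assert (N4 : qpoch (p * c) p r <> 0) by (apply qpoch_nz; auto).
    field. repeat split; auto.
Qed.


Definition Gc r := slim (fun m => X (m + r) r).

Lemma Gc_cv r : cv (fs (fun m => X (m + r) r)) (Gc r).
Proof. apply slim_cv. destruct (col_cv r) as [L [HL _]]. exists L; auto. Qed.

Lemma Gc_eq r : Gc r * (qpinf p p * qpinf z p) = qpinf (p * a) p * qpinf (p * c) p * term1 r.
Proof.
  destruct (col_cv r) as [L [HL HE]]. rewrite <- HE. f_equal. eapply cv_unique. apply Gc_cv. auto.
Qed.

Definition gN N r := if Nat.ltb r N then fs (fun m => X (m + r) r) (N - r) else 0.

Lemma main_series : exists L, cv (fs term2) (L / 2) /\ cv (fs term1) (qpinf p p * qpinf z p / (qpinf (p * a) p * qpinf (p * c) p) * L).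
Proof.
  destruct X_bound as [Dx HDx].
  assert (Hqp : (0 < Cmod q)%R) by (apply Cmod_pos_nz; auto).
  assert (Hz1 := z_lt1).
  set (rho0 := (Cmod z / Cmod q)%R).
  assert (Hr0 : (0 <= rho0 < 1)%R).
  { unfold rho0. split. apply Rdiv_le_0_compat; auto; apply Cmod_ge_0.
    apply Rmult_lt_reg_r with (Cmod q); auto. unfold Rdiv. rewrite Rmult_assoc, Rinv_l by lra. unfold z. lra. }
  assert (HDx0 : (0 <= Dx)%R).
  { specialize (HDx O O (le_n _)). simpl in HDx. generalize (Cmod_ge_0 (X 0 0)). lra. }
  destruct (tannery gN (fun N => fs (gN N) N) Gc (Dx / (1 - Cmod z)) rho0 Hr0) as [L [HL1 HL2]].
  - intros N r. unfold gN. destruct (Nat.ltb_spec r N).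
    + assert (B := fs_bound' (fun m => X (m + r) r) (Dx * rho0 ^ r) (Cmod z) (N - r)).
      replace (Dx / (1 - Cmod z) * rho0 ^ r)%R with (Dx * rho0 ^ r / (1 - Cmod z))%R by (field; lra).
      apply B. split; [apply Cmod_ge_0|auto].
      intros k. eapply Rle_trans. apply HDx. lia.
      unfold rho0. rewrite pow_add. unfold Rdiv. rewrite Rpow_mult_distr, pow_inv.
      right. field. apply pow_nonzero. lra.
    + rewrite Cmod_0. apply Rmult_le_pos. apply Rdiv_le_0_compat; lra. apply pow_le; lra.
  - intros N. apply fs_finite_cv. intros r Hr. unfold gN. destruct (Nat.ltb_spec r N); auto. lia.
  - intros r. apply (cv_ext_ev (fun N => fs (fun m => X (m + r) r) (N - r)) _ _ (S r)).
    intros N HN. unfold gN. destruct (Nat.ltb_spec r N); auto. lia.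
    apply cv_sub_shift. apply Gc_cv.
  - exists L. split.
    + replace (L / 2) with (/ 2 * L) by (unfold Cdiv; ring).
      apply cv_ext with (fun N => / 2 * fs (gN N) N).
      2:{ apply cv_scal. auto. }
      intros N. 
      assert (E : fs (gN N) N = fs (fun n => fs (X n) (S n)) N).
      { transitivity (fs (fun r => fs (fun m => X (m + r)%nat r) (N - r)) N).
        apply fs_ext. intros r Hr. unfold gN. destruct (Nat.ltb_spec r N); auto. lia.
        rewrite <- (fs_swap X N). reflexivity. }
      rewrite E. rewrite (fs_ext _ (fun n => 2 * term2 n)) by (intros; apply X_row). rewrite fs_scal.
      rewrite Cmult_assoc, Cinv_l, Cmult_1_l. reflexivity. apply C2_nz.
    + assert (NA : qpinf (p * a) p <> 0) by (apply qpinf_nz; auto).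
      assert (NC : qpinf (p * c) p <> 0) by (apply qpinf_nz; auto).
      apply cv_ext with (fun N => qpinf p p * qpinf z p / (qpinf (p * a) p * qpinf (p * c) p) * fs Gc N).
      2:{ apply cv_scal. auto. }
      intros N. rewrite <- fs_scal. apply fs_ext. intros r _.
      apply (Cmult_eq_reg_l (qpinf (p * a) p * qpinf (p * c) p)). apply Cmult_neq_0; auto.
      transitivity (Gc r * (qpinf p p * qpinf z p)). field. split; auto.
      rewrite Gc_eq. ring.
Qed.

End Main.

Theorem theorem8p2 (q a c : C) :
  (0 < Cmod q)%R -> (Cmod q < 1)%R ->
  a <> 0 -> c <> 0 ->
  (forall k : nat, q ^ 2 * a * pow_n (q ^ 2) k <> 1) ->
  (forall k : nat, q ^ 2 * c * pow_n (q ^ 2) k <> 1) ->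
  (Cmod (a * c) < Cmod q)%R ->
  exists S : C,
    is_series (fun n : nat =>
        (1 - pow_n q (4 * n + 2))
        * (qpoch (q ^ 2 / a) (q ^ 2) n * qpoch (q ^ 2 / c) (q ^ 2) n
           / (qpoch (q ^ 2 * a) (q ^ 2) n * qpoch (q ^ 2 * c) (q ^ 2) n))
        * pow_n (a * c) n
        * inner_sum q n) 
      (2 * (qpinf (q ^ 2) (q ^ 2) * qpinf (a * c) (q ^ 2))
         / (qpinf (q ^ 2 * a) (q ^ 2) * qpinf (q ^ 2 * c) (q ^ 2)) * S)
    /\
    is_series (fun n : nat =>
        qpoch (q ^ 2 / a) (q ^ 2) n * qpoch (q ^ 2 / c) (q ^ 2) n
        / ((1 + pow_n q (2 * n)) * (qpoch (- q) (q ^ 2) n * qpoch (q ^ 2) (q ^ 2) n))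
        * pow_n (- (a * c / q)) n)
      S.
Proof.
  intros Hq0' Hq Ha Hc Hqa Hqc Hz.
  assert (Hq0 : q <> 0) by (intro E; rewrite E, Cmod_0 in Hq0'; lra).
  assert (Hqa' : forall k : nat, q ^ 2 * a * (q ^ 2) ^ k <> 1) by (intros k; rewrite <- pow_n_Cpow; auto).
  assert (Hqc' : forall k : nat, q ^ 2 * c * (q ^ 2) ^ k <> 1) by (intros k; rewrite <- pow_n_Cpow; auto).
  destruct (main_series q a c Hq0 Hq Ha Hc Hqa' Hqc' Hz) as [L [H2 H1]].
  exists (L / 2). split.
  - apply is_series_cv.
    assert (NA : qpinf (q ^ 2 * a) (q ^ 2) <> 0) by (apply qpinf_nz; auto; apply Hq2; auto).
    assert (NC : qpinf (q ^ 2 * c) (q ^ 2) <> 0) by (apply qpinf_nz; auto; apply Hq2; auto).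
    replace (2 * (qpinf (q ^ 2) (q ^ 2) * qpinf (a * c) (q ^ 2)) / (qpinf (q ^ 2 * a) (q ^ 2) * qpinf (q ^ 2 * c) (q ^ 2)) * (L / 2))
      with (qpinf (q ^ 2) (q ^ 2) * qpinf (a * c) (q ^ 2) / (qpinf (q ^ 2 * a) (q ^ 2) * qpinf (q ^ 2 * c) (q ^ 2)) * L).
    exact H1.
    field. repeat split; auto.
  - apply is_series_cv. exact H2.
Qed.
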